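(* Let $\mu>0$ and $w\in W^{1,\infty}_{0,\mu}$, and define $v(t)=e^{-t\partial_x^3}w^\vee$, i.e. $v(t,x)=\frac1{2\pi}\int_{\mathbb R}e^{ix\xi+it\xi^3}w(\xi)\,d\xi$. Then for $0<t_0<t_1$ and $R\ge1$, $$\forall t\in[t_0,t_1],\qquad\|v(t)\|_{W^{1,\infty}([-R,R])}\lesssim_{t_0,t_1}R^2\|w\|_{W^{1,\infty}_{0,\mu}}.$$
   Context: $\langle\xi\rangle=(1+\xi^2)^{1/2}$; $\|w\|_{W^{1,\infty}_{0,\mu}}=\|w\|_{L^\infty(\mathbb R)}+\|\langle\xi\rangle^\mu\partial_\xi w\|_{L^\infty(\mathbb R)}$. The integral defining $v$ is understood in the oscillatory/distributional sense. *)

(* Defs.v *)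
From Stdlib Require Import Reals.
From Coquelicot Require Import Coquelicot.
Open Scope R_scope.

Definition jbr (xi : R) : R := sqrt (1 + xi ^ 2).
Definition jbr_negpow (mu xi : R) : R := Rpower (1 + xi ^ 2) (- mu / 2).

Definition expi (theta : R) : C := (cos theta, sin theta).

(* The (A,B)-bound for the W^{1,oo}_{0,mu} norm:
   ||w||_{L^oo} <= A  (w is continuous, so ess sup = sup), and
   ||<xi>^mu d_xi w||_{L^oo} <= B, written in integrated form:
   for a <= b, |w b - w a| <= B * int_a^b <xi>^(-mu) dxi.
   Then ||w||_{W^{1,oo}_{0,mu}} = inf A + inf B over admissible A, B. *)
Definition W1inf0mu_bound (mu : R) (w : R -> C) (A B : R) : Prop :=
  (forall xi, Cmod (w xi) <= A) /\
  (forall a b, a <= b ->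
     Cmod (w b - w a) <= B * RInt (jbr_negpow mu) a b).

Definition airy_integrand (w : R -> C) (t x : R) (xi : R) : C :=
  @scal R_Ring C_R_ModuleSpace (1 / (2 * PI)) (expi (x * xi + t * xi ^ 3) * w xi)%C.

(* The oscillatory integral v(t,x) = (1/2pi) int e^{i x xi + i t xi^3} w(xi) dxi,
   understood as the limit of the symmetric truncations over [-N, N], N -> +oo. *)
Definition osc_integral_is (f : R -> C) (l : C) : Prop :=
  filterlim (fun N : R => @RInt C_R_CompleteNormedModule f (- N) N) (Rbar_locally p_infty) (locally l).

(* Main.v *)
Require Import Defs.
From Stdlib Require Import Reals Lra Psatz Lia ZArith ClassicalEpsilon.
From Coquelicot Require Import Coquelicot.
Open Scope R_scope.

Lemma normC (z : C) : @norm R_AbsRing C_R_NormedModule z = Cmod z.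
Proof.
  destruct z as [a b]. unfold norm; simpl. unfold prod_norm, Cmod; simpl.
  unfold norm; simpl. unfold abs; simpl.
  f_equal; rewrite !Rmult_1_r, <- !Rabs_mult, !Rabs_pos_eq; nra.
Qed.

Lemma cC_intro (f : R -> C) x :
  continuous (fun y => fst (f y)) x -> continuous (fun y => snd (f y)) x ->
  @continuous R_UniformSpace C_R_NormedModule f x.
Proof.
  intros H1 H2.
  apply (continuous_ext (fun y => (fst (f y), snd (f y)))).
  { intros y. destruct (f y); reflexivity. }
  apply (continuous_comp_2 (U:=R_UniformSpace) (V:=R_UniformSpace) (W:=R_UniformSpace) (X:=C_R_NormedModule) (fun y => fst (f y)) (fun y => snd (f y)) (fun a b => (a,b))); auto.
  apply (continuous_ext (fun p => p)). { intros [a b]; reflexivity. }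
  apply continuous_id.
Qed.

Notation CR := C_R_NormedModule.

Lemma cC_fst (f : R -> C) x : @continuous R_UniformSpace CR f x -> continuous (fun y => fst (f y)) x.
Proof.
  intros H. apply (continuous_comp f fst x H).
  destruct (f x) as [a b]. apply (continuous_fst (U:=R_UniformSpace) (V:=R_UniformSpace)).
Qed.

Lemma cC_snd (f : R -> C) x : @continuous R_UniformSpace CR f x -> continuous (fun y => snd (f y)) x.
Proof.
  intros H. apply (continuous_comp f snd x H).
  destruct (f x) as [a b]. apply (continuous_snd (U:=R_UniformSpace) (V:=R_UniformSpace)).
Qed.

Lemma dC_fst (f : R -> C) x l : @is_derive R_AbsRing CR f x l -> is_derive (fun y => fst (f y)) x (fst l).
Proof.
  intros H. unfold is_derive in *.
  apply (filterdiff_ext_lin _ (fun y : R_AbsRing => fst (scal y l))).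
  - apply (filterdiff_comp f (fun t : CR => fst t) _ (fun t : CR => fst t) H).
    apply filterdiff_linear. apply (is_linear_fst (U:=R_NormedModule) (V:=R_NormedModule)).
  - intros y. destruct l; reflexivity.
Qed.

Lemma dC_snd (f : R -> C) x l : @is_derive R_AbsRing CR f x l -> is_derive (fun y => snd (f y)) x (snd l).
Proof.
  intros H. unfold is_derive in *.
  apply (filterdiff_ext_lin _ (fun y : R_AbsRing => snd (scal y l))).
  - apply (filterdiff_comp f (fun t : CR => snd t) _ (fun t : CR => snd t) H).
    apply filterdiff_linear. apply (is_linear_snd (U:=R_NormedModule) (V:=R_NormedModule)).
  - intros y. destruct l; reflexivity.
Qed.

Lemma dC_intro (f : R -> C) x a b :
  is_derive (fun y => fst (f y)) x a -> is_derive (fun y => snd (f y)) x b ->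
  @is_derive R_AbsRing CR f x (a, b).
Proof.
  intros H1 H2. unfold is_derive in *.
  apply (filterdiff_ext (fun y => (fst (f y), snd (f y)))).
  { intros y. destruct (f y); reflexivity. }
  apply (filterdiff_ext_lin _ (fun y : R_AbsRing => ((scal y a : R), (scal y b : R)))).
  2: { intros y; reflexivity. }
  apply (filterdiff_comp_2 (U:=R_NormedModule) (V:=R_NormedModule) (W:=CR) (fun y => fst (f y)) (fun y => snd (f y)) (fun a b => (a,b)) _ _ (fun a b => (a,b)) H1 H2).
  apply (filterdiff_ext_lin _ (fun t => t)).
  - apply (filterdiff_ext (fun t => t)). { intros [u v]; reflexivity. }
    apply filterdiff_id.
  - intros [u v]; reflexivity.
Qed.

Lemma dR_eq (f : R -> R) x l l' : is_derive f x l -> l = l' -> is_derive f x l'.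
Proof. intros H ->; exact H. Qed.

Lemma dC_eq (f : R -> C) x l l' : @is_derive R_AbsRing CR f x l -> l = l' -> @is_derive R_AbsRing CR f x l'.
Proof. intros H ->; exact H. Qed.

Lemma dR_mult (f g : R -> R) x df dg : is_derive f x df -> is_derive g x dg ->
  is_derive (fun y => f y * g y) x (df * g x + f x * dg).
Proof. apply Derive.is_derive_mult. Qed.

Lemma dR_minus (f g : R -> R) x df dg : is_derive f x df -> is_derive g x dg ->
  is_derive (fun y => f y - g y) x (df - dg).
Proof. intros H1 H2. apply (is_derive_minus f g x df dg H1 H2). Qed.

Lemma dR_plus (f g : R -> R) x df dg : is_derive f x df -> is_derive g x dg ->
  is_derive (fun y => f y + g y) x (df + dg).
Proof. intros H1 H2. apply (is_derive_plus f g x df dg H1 H2). Qed.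

Lemma dC_mult (f g : R -> C) x df dg :
  @is_derive R_AbsRing CR f x df -> @is_derive R_AbsRing CR g x dg ->
  @is_derive R_AbsRing CR (fun y => (f y * g y)%C) x (df * g x + f x * dg)%C.
Proof.
  intros Hf Hg.
  pose proof (dC_fst _ _ _ Hf) as Hf1. pose proof (dC_snd _ _ _ Hf) as Hf2.
  pose proof (dC_fst _ _ _ Hg) as Hg1. pose proof (dC_snd _ _ _ Hg) as Hg2.
  eapply dC_eq. apply dC_intro.
  - simpl. apply dR_minus; apply dR_mult; eassumption.
  - simpl. apply dR_plus; apply dR_mult; eassumption.
  - destruct df, dg, (f x), (g x); simpl. apply injective_projections; simpl; ring.
Qed.

Lemma dC_plus (f g : R -> C) x df dg :
  @is_derive R_AbsRing CR f x df -> @is_derive R_AbsRing CR g x dg ->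
  @is_derive R_AbsRing CR (fun y => (f y + g y)%C) x (df + dg)%C.
Proof.
  intros Hf Hg.
  pose proof (dC_fst _ _ _ Hf) as Hf1. pose proof (dC_snd _ _ _ Hf) as Hf2.
  pose proof (dC_fst _ _ _ Hg) as Hg1. pose proof (dC_snd _ _ _ Hg) as Hg2.
  eapply dC_eq. apply dC_intro.
  - simpl. apply dR_plus; eassumption.
  - simpl. apply dR_plus; eassumption.
  - destruct df, dg; reflexivity.
Qed.

Lemma dC_const (c : C) x : @is_derive R_AbsRing CR (fun _ => c) x (RtoC 0).
Proof.
  eapply dC_eq. apply dC_intro; apply is_derive_const. reflexivity.
Qed.

Lemma dC_RtoC (f : R -> R) x d : is_derive f x d ->
  @is_derive R_AbsRing CR (fun y => RtoC (f y)) x (RtoC d).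
Proof.
  intros H. eapply dC_eq. apply dC_intro. simpl; exact H. simpl; apply is_derive_const. reflexivity.
Qed.

Lemma dC_expi (f : R -> R) x d : is_derive f x d ->
  @is_derive R_AbsRing CR (fun y => expi (f y)) x (Ci * RtoC d * expi (f x))%C.
Proof.
  intros H. eapply dC_eq. apply dC_intro; simpl.
  - apply (is_derive_comp cos f x _ d (is_derive_cos (f x)) H).
  - apply (is_derive_comp sin f x _ d (is_derive_sin (f x)) H).
  - unfold expi; simpl. apply injective_projections; simpl; unfold scal; simpl; unfold mult; simpl; ring.
Qed.

Lemma cR_mult (f g : R -> R) x : continuous f x -> continuous g x -> continuous (fun y => f y * g y) x.
Proof. intros H1 H2. apply (continuous_mult (U:=R_UniformSpace) (K:=R_AbsRing) f g x H1 H2). Qed.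
Lemma cR_plus (f g : R -> R) x : continuous f x -> continuous g x -> continuous (fun y => f y + g y) x.
Proof. intros H1 H2. apply (continuous_plus (U:=R_UniformSpace) (V:=R_NormedModule) f g x H1 H2). Qed.
Lemma cR_minus (f g : R -> R) x : continuous f x -> continuous g x -> continuous (fun y => f y - g y) x.
Proof. intros H1 H2. apply (continuous_minus (U:=R_UniformSpace) (V:=R_NormedModule) f g x H1 H2). Qed.

Lemma cC_mult (f g : R -> C) x :
  @continuous R_UniformSpace CR f x -> @continuous R_UniformSpace CR g x ->
  @continuous R_UniformSpace CR (fun y => (f y * g y)%C) x.
Proof.
  intros Hf Hg. apply cC_intro; simpl.
  - apply cR_minus; apply cR_mult; (apply cC_fst || apply cC_snd); assumption.
  - apply cR_plus; apply cR_mult; (apply cC_fst || apply cC_snd); assumption.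
Qed.

Lemma cC_plus (f g : R -> C) x :
  @continuous R_UniformSpace CR f x -> @continuous R_UniformSpace CR g x ->
  @continuous R_UniformSpace CR (fun y => (f y + g y)%C) x.
Proof.
  intros Hf Hg. apply cC_intro; simpl.
  - apply cR_plus; apply cC_fst; assumption.
  - apply cR_plus; apply cC_snd; assumption.
Qed.

Lemma cC_const (c : C) x : @continuous R_UniformSpace CR (fun _ => c) x.
Proof. apply continuous_const. Qed.

Lemma cC_RtoC (f : R -> R) x : continuous f x -> @continuous R_UniformSpace CR (fun y => RtoC (f y)) x.
Proof. intros H. apply cC_intro; simpl. exact H. apply continuous_const. Qed.

Lemma cR_cos (f : R -> R) x : continuous f x -> continuous (fun y => cos (f y)) x.
Proof. intros H. apply (continuous_comp f cos x H). apply (ex_derive_continuous (K:=R_AbsRing) (V:=R_NormedModule)). eexists; apply is_derive_cos. Qed.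
Lemma cR_sin (f : R -> R) x : continuous f x -> continuous (fun y => sin (f y)) x.
Proof. intros H. apply (continuous_comp f sin x H). apply (ex_derive_continuous (K:=R_AbsRing) (V:=R_NormedModule)). eexists; apply is_derive_sin. Qed.

Lemma cC_expi (f : R -> R) x : continuous f x -> @continuous R_UniformSpace CR (fun y => expi (f y)) x.
Proof. intros H. apply cC_intro; simpl. apply cR_cos; auto. apply cR_sin; auto. Qed.

Lemma dC_cont (f : R -> C) x l : @is_derive R_AbsRing CR f x l -> @continuous R_UniformSpace CR f x.
Proof. intros H. apply (ex_derive_continuous (V:=CR)). exists l; exact H. Qed.

Lemma dR_cont (f : R -> R) x l : is_derive f x l -> continuous f x.
Proof. intros H. apply (ex_derive_continuous (K:=R_AbsRing) (V:=R_NormedModule)). exists l; exact H. Qed.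

Notation CRC := C_R_CompleteNormedModule.
Notation RIC := (@RInt CRC).
Notation exC := (@ex_RInt CRC).

Lemma exC_cont (f : R -> C) a b :
  (forall z, Rmin a b <= z <= Rmax a b -> @continuous R_UniformSpace CR f z) -> exC f a b.
Proof. intros H. apply (ex_RInt_continuous (V:=CRC)). exact H. Qed.

Lemma exR_cont (f : R -> R) a b :
  (forall z, Rmin a b <= z <= Rmax a b -> continuous f z) -> ex_RInt f a b.
Proof. intros H. apply (ex_RInt_continuous (V:=R_CompleteNormedModule)). exact H. Qed.

Lemma isC_mult_r (f : R -> C) a b l c :
  @is_RInt CR f a b l -> @is_RInt CR (fun x => (f x * c)%C) a b (l * c)%C.
Proof.
  intros H.
  pose proof (is_RInt_fct_extend_fst (U:=R_NormedModule) (V:=R_NormedModule) _ _ _ _ H) as H1.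
  pose proof (is_RInt_fct_extend_snd (U:=R_NormedModule) (V:=R_NormedModule) _ _ _ _ H) as H2.
  destruct c as [c1 c2].
  apply (is_RInt_ext (V:=CR) (fun x => (fst (f x) * c1 - snd (f x) * c2, fst (f x) * c2 + snd (f x) * c1))).
  { intros x _. reflexivity. }
  replace (l * (c1, c2))%C with (fst l * c1 - snd l * c2, fst l * c2 + snd l * c1).
  2: { destruct l; reflexivity. }
  apply (is_RInt_fct_extend_pair (U:=R_NormedModule) (V:=R_NormedModule)); simpl.
  - apply (is_RInt_ext (V:=R_NormedModule) (fun x => minus (scal c1 (fst (f x))) (scal c2 (snd (f x))))).
    { intros x _. unfold minus, plus, opp, scal; simpl. unfold mult; simpl. ring. }
    replace (fst l * c1 - snd l * c2) with (minus (scal c1 (fst l)) (scal c2 (snd l))).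
    2: { unfold minus, plus, opp, scal; simpl. unfold mult; simpl. ring. }
    apply (is_RInt_minus (V:=R_NormedModule)); apply (is_RInt_scal (V:=R_NormedModule)); [exact H1 | exact H2].
  - apply (is_RInt_ext (V:=R_NormedModule) (fun x => plus (scal c2 (fst (f x))) (scal c1 (snd (f x))))).
    { intros x _. unfold minus, plus, opp, scal; simpl. unfold mult; simpl. ring. }
    replace (fst l * c2 + snd l * c1) with (plus (scal c2 (fst l)) (scal c1 (snd l))).
    2: { unfold minus, plus, opp, scal; simpl. unfold mult; simpl. ring. }
    apply (is_RInt_plus (V:=R_NormedModule)); apply (is_RInt_scal (V:=R_NormedModule)); [exact H1 | exact H2].
Qed.

Lemma RIC_mult_r (f : R -> C) a b c : exC f a b -> RIC (fun x => (f x * c)%C) a b = (RIC f a b * c)%C.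
Proof.
  intros H. apply is_RInt_unique. apply isC_mult_r. apply (RInt_correct (V:=CRC)). exact H.
Qed.

Lemma exC_mult_r (f : R -> C) a b c : exC f a b -> exC (fun x => (f x * c)%C) a b.
Proof.
  intros H. eexists. apply isC_mult_r. apply (RInt_correct (V:=CRC)). exact H.
Qed.

Lemma Cmod_RInt_le (f : R -> C) (g : R -> R) a b :
  a <= b -> exC f a b -> ex_RInt g a b -> (forall x, a <= x <= b -> Cmod (f x) <= g x) ->
  Cmod (RIC f a b) <= RInt g a b.
Proof.
  intros Hab Hf Hg H. rewrite <- normC.
  apply (norm_RInt_le (V:=CR) f g a b); auto.
  - intros x Hx. rewrite normC. auto.
  - apply (RInt_correct (V:=CRC)). exact Hf.
  - apply (RInt_correct (V:=R_CompleteNormedModule)). exact Hg.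
Qed.

Lemma Cmod_RInt_const (f : R -> C) a b M :
  a <= b -> exC f a b -> (forall x, a <= x <= b -> Cmod (f x) <= M) ->
  Cmod (RIC f a b) <= (b - a) * M.
Proof.
  intros Hab Hf H. eapply Rle_trans. apply (Cmod_RInt_le f (fun _ => M)); auto.
  apply ex_RInt_const. rewrite RInt_const. right; reflexivity.
Qed.


Lemma minusC (x y : C) : @minus CR x y = (x - y)%C.
Proof. reflexivity. Qed.
Lemma minusCC (x y : C) : @minus CRC x y = (x - y)%C.
Proof. reflexivity. Qed.
Lemma plusCC (x y : C) : @plus CRC x y = (x + y)%C.
Proof. reflexivity. Qed.
Lemma plusC (x y : C) : @plus CR x y = (x + y)%C.
Proof. reflexivity. Qed.
Lemma zeroC : @zero CR = RtoC 0.
Proof. reflexivity. Qed.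
Lemma zeroCC : @zero CRC = RtoC 0.
Proof. reflexivity. Qed.
Lemma scalC (k : R) (x : C) : @scal R_Ring CR k x = (RtoC k * x)%C.
Proof. destruct x as [a b]. unfold Cmult, RtoC. simpl. change (@scal R_Ring CR k (a, b)) with ((k * a, k * b) : C). apply injective_projections; simpl; ring. Qed.

Ltac cring := repeat match goal with |- context [@RInt ?V ?f ?a ?b] =>
    let X := fresh "X" in set (X := @RInt V f a b); clearbody X; change C in X end;
  match goal with |- ?x = ?y => change (@eq C x y) end; ring.

Lemma Cmod_minus_le (x y : C) : Cmod (x - y) <= Cmod x + Cmod y.
Proof.
  unfold Cminus. eapply Rle_trans. apply Cmod_triangle. rewrite Cmod_opp. lra.
Qed.

Lemma Cmod_expi s : Cmod (expi s) = 1.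
Proof.
  unfold Cmod, expi. simpl fst; simpl snd. rewrite <- sqrt_1. f_equal.
  pose proof (sin2_cos2 s) as Hs. unfold Rsqr in Hs. nra.
Qed.

Lemma expi_add a b : expi (a + b) = (expi a * expi b)%C.
Proof.
  unfold expi, Cmult; simpl. rewrite cos_plus, sin_plus. apply injective_projections; simpl; ring.
Qed.

Lemma RInt_rho_le (rho : R -> R) c d :
  c <= d -> (forall x, continuous rho x) -> (forall x, 0 <= rho x <= 1) -> RInt rho c d <= d - c.
Proof.
  intros Hcd Hc Hr. replace (d - c) with (RInt (fun _ => 1) c d).
  - apply RInt_le; auto. apply exR_cont; intros; auto. apply ex_RInt_const.
    intros x _. apply Hr.
  - rewrite RInt_const. unfold scal; simpl; unfold mult; simpl. ring.
Qed.

Lemma RInt_rho_ge0 (rho : R -> R) c d :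
  c <= d -> (forall x, continuous rho x) -> (forall x, 0 <= rho x <= 1) -> 0 <= RInt rho c d.
Proof.
  intros Hcd Hc Hr. apply RInt_ge_0; auto. apply exR_cont; intros; auto.
  intros x _; apply Hr.
Qed.

Lemma le_of_le_inv (x y c : R) : 0 <= c -> (forall n : nat, (0 < n)%nat -> x <= y + c / INR n) -> x <= y.
Proof.
  intros Hc Hall. destruct (Rle_or_lt x y) as [|Hlt]; auto.
  destruct (archimed (c / (x - y))) as [Ha _].
  set (n := Z.to_nat (up (c / (x - y)))).
  assert (Hpos : 0 <= c / (x - y)) by (apply Rdiv_le_0_compat; lra).
  assert (Hup : 0 < IZR (up (c / (x - y)))) by lra.
  assert (Hz : (0 < up (c / (x - y)))%Z) by (apply lt_IZR; exact Hup).
  assert (Hn : INR (S n) = IZR (up (c / (x - y))) + 1).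
  { rewrite S_INR. unfold n. rewrite INR_IZR_INZ. rewrite Z2Nat.id by lia. reflexivity. }
  specialize (Hall (S n) ltac:(lia)). rewrite Hn in Hall.
  assert (c / (IZR (up (c / (x - y))) + 1) < x - y).
  { apply (Rmult_lt_reg_r (IZR (up (c / (x - y))) + 1)). lra.
    unfold Rdiv. rewrite Rmult_assoc, Rinv_l by lra.
    assert (c = c / (x - y) * (x - y)) by (field; lra). nra. }
  lra.
Qed.

Definition ibpF (h h' u : R -> C) a s :=
  (RIC (fun x => h' x * u x) a s - (h s * u s - h a * u a))%C.

Section IBP.
Variables (h h' u : R -> C) (H rho : R -> R) (a b D B : R).
Hypothesis Hab : a <= b.
Hypothesis HB : 0 <= B.
Hypothesis HD : 0 <= D.
Hypothesis Hder : forall x, a <= x <= b -> @is_derive R_AbsRing CR h x (h' x).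
Hypothesis Hch' : forall x, a <= x <= b -> @continuous R_UniformSpace CR h' x.
Hypothesis Hcu : forall x, @continuous R_UniformSpace CR u x.
Hypothesis HcH : forall x, a <= x <= b -> continuous H x.
Hypothesis Hcr : forall x, continuous rho x.
Hypothesis Hh'D : forall x, a <= x <= b -> Cmod (h' x) <= D.
Hypothesis HhH : forall x, a <= x <= b -> Cmod (h x) <= H x.
Hypothesis HHdec : forall x y, a <= x -> x <= y -> y <= b -> H y <= H x.
Hypothesis Hr01 : forall x, 0 <= rho x <= 1.
Hypothesis Hu : forall c d, c <= d -> Cmod (u d - u c) <= B * RInt rho c d.

Lemma ibp_ex1 c d : a <= c -> c <= d -> d <= b -> exC (fun x => h' x * u x)%C c d.
Proof.
  intros. apply exC_cont. intros z Hz. rewrite Rmin_left in Hz by lra. rewrite Rmax_right in Hz by lra.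
  apply cC_mult. apply Hch'; lra. apply Hcu.
Qed.

Lemma ibp_ex2 c d : a <= c -> c <= d -> d <= b -> ex_RInt (fun x => H x * rho x) c d.
Proof.
  intros. apply exR_cont. intros z Hz. rewrite Rmin_left in Hz by lra. rewrite Rmax_right in Hz by lra.
  apply cR_mult. apply HcH; lra. apply Hcr.
Qed.

Lemma ibp_step s d : a <= s -> 0 <= d -> s + d <= b ->
  Cmod (ibpF h h' u a (s + d) - ibpF h h' u a s) <= B * RInt (fun x => H x * rho x) s (s + d) + D * B * d * d.
Proof.
  intros H1 H2 H3.
  assert (Ech : RIC (fun x => h' x * u x)%C a (s + d) = (RIC (fun x => h' x * u x)%C a s + RIC (fun x => h' x * u x)%C s (s + d))%C).
  { rewrite <- plusC. symmetry. apply (RInt_Chasles (V:=CRC)); apply ibp_ex1; lra. }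
  assert (Exh' : exC h' s (s + d)).
  { apply exC_cont. intros z Hz. rewrite Rmin_left in Hz by lra. rewrite Rmax_right in Hz by lra. apply Hch'; lra. }
  assert (Ed : RIC h' s (s + d) = (h (s + d) - h s)%C).
  { rewrite <- minusC. apply is_RInt_unique. apply (is_RInt_derive (V:=CRC)).
    - intros x Hx. rewrite Rmin_left in Hx by lra. rewrite Rmax_right in Hx by lra. apply Hder; lra.
    - intros x Hx. rewrite Rmin_left in Hx by lra. rewrite Rmax_right in Hx by lra. apply Hch'; lra. }
  assert (Exd : exC (fun x => h' x * (u x - u s))%C s (s + d)).
  { apply exC_cont. intros z Hz. rewrite Rmin_left in Hz by lra. rewrite Rmax_right in Hz by lra.
    apply cC_mult. apply Hch'; lra. apply cC_plus. apply Hcu. apply cC_const. }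
  assert (Esplit : RIC (fun x => h' x * u x)%C s (s + d) =
     (RIC (fun x => h' x * (u x - u s))%C s (s + d) + (h (s + d) - h s) * u s)%C).
  { rewrite (RInt_ext (V:=CRC) (fun x => h' x * (u x - u s))%C (fun x => @minus CR (h' x * u x)%C (h' x * u s)%C)).
    2: { intros x _. change (@minus CR (h' x * u x)%C (h' x * u s)%C) with ((h' x * u x) - (h' x * u s))%C. cring. }
    rewrite (RInt_minus (V:=CRC)).
    2: apply ibp_ex1; lra.
    2: apply exC_mult_r; exact Exh'.
    rewrite RIC_mult_r by exact Exh'. rewrite Ed. rewrite ?minusC, ?minusCC. cring. }
  assert (Eq : (ibpF h h' u a (s + d) - ibpF h h' u a s)%C =
     (RIC (fun x => h' x * (u x - u s))%C s (s + d) - h (s + d) * (u (s + d) - u s))%C).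
  { unfold ibpF. rewrite Ech, Esplit. cring. }
  rewrite Eq. eapply Rle_trans. apply Cmod_minus_le.
  assert (B1 : Cmod (RIC (fun x => h' x * (u x - u s))%C s (s + d)) <= d * (D * (B * d))).
  { assert (Hc : Cmod (RIC (fun x => h' x * (u x - u s))%C s (s + d)) <= (s + d - s) * (D * (B * d))).
    { apply Cmod_RInt_const; [lra | exact Exd |].
      intros x Hx. rewrite Cmod_mult. apply Rmult_le_compat; try apply Cmod_ge_0.
      apply Hh'D; lra. eapply Rle_trans. apply Hu; lra. apply Rmult_le_compat_l; auto.
      eapply Rle_trans. apply RInt_rho_le; auto; lra. lra. }
    replace (s + d - s) with d in Hc by ring. exact Hc. }
  assert (B2 : Cmod (h (s + d) * (u (s + d) - u s))%C <= B * RInt (fun x => H x * rho x) s (s + d)).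
  { rewrite Cmod_mult. eapply Rle_trans.
    apply Rmult_le_compat; try apply Cmod_ge_0. apply HhH; lra. apply Hu; lra.
    replace (H (s + d) * (B * RInt rho s (s + d))) with (B * (H (s + d) * RInt rho s (s + d))) by ring.
    apply Rmult_le_compat_l; auto.
    replace (H (s + d) * RInt rho s (s + d)) with (RInt (fun x => H (s + d) * rho x) s (s + d)).
    2: { rewrite (RInt_scal (V:=R_CompleteNormedModule)). reflexivity. apply exR_cont; intros; auto. }
    apply RInt_le; [lra | | apply ibp_ex2; lra |].
    apply exR_cont; intros; apply cR_mult; [apply continuous_const | auto].
    intros x Hx. apply Rmult_le_compat_r. apply Hr01. apply HHdec; lra. }
  nra.
Qed.

Lemma ibp_F0 : ibpF h h' u a a = RtoC 0.
Proof. unfold ibpF. rewrite (RInt_point (V:=CRC)). rewrite zeroCC. cring. Qed.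

Lemma ibp_induct (d : R) (n : nat) : 0 <= d -> INR n * d <= b - a ->
  Cmod (ibpF h h' u a (a + INR n * d)) <= B * RInt (fun x => H x * rho x) a (a + INR n * d) + INR n * (D * B * d * d).
Proof.
  intros Hd. induction n as [|n IH]; intros Hn.
  - rewrite INR_0, Rmult_0_l, Rplus_0_r, ibp_F0, (RInt_point (V:=R_CompleteNormedModule)), Cmod_0. change (@zero R_CompleteNormedModule) with 0. right; ring.
  - rewrite S_INR in *.
    assert (HnR : 0 <= INR n) by apply pos_INR.
    assert (IH' := IH ltac:(nra)).
    replace (a + (INR n + 1) * d) with ((a + INR n * d) + d) by ring.
    assert (E : ibpF h h' u a (a + INR n * d + d) = (ibpF h h' u a (a + INR n * d) + (ibpF h h' u a (a + INR n * d + d) - ibpF h h' u a (a + INR n * d)))%C) by ring.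
    rewrite E. eapply Rle_trans. apply Cmod_triangle.
    assert (St := ibp_step (a + INR n * d) d ltac:(nra) Hd ltac:(nra)).
    rewrite <- (RInt_Chasles (V:=R_CompleteNormedModule) _ a (a + INR n * d) (a + INR n * d + d)).
    2: apply ibp_ex2; nra. 2: apply ibp_ex2; nra.
    change (plus ?x ?y) with (x + y). nra.
Qed.

Theorem ibp_ineq :
  Cmod (RIC (fun x => h' x * u x)%C a b - (h b * u b - h a * u a))%C <= B * RInt (fun x => H x * rho x) a b.
Proof.
  apply (le_of_le_inv _ _ (D * B * (b - a) * (b - a))). 
  { assert (0 <= b - a) by lra. apply Rmult_le_pos; [apply Rmult_le_pos|]; [apply Rmult_le_pos| |]; auto. }
  intros n Hn. assert (HnR : 0 < INR n) by (apply lt_0_INR; lia).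
  assert (Hi := ibp_induct ((b - a) / INR n) n ltac:(apply Rdiv_le_0_compat; lra) ltac:(right; field; lra)).
  replace (a + INR n * ((b - a) / INR n)) with b in Hi by (field; lra).
  change (Cmod (ibpF h h' u a b) <= B * RInt (fun x => H x * rho x) a b + D * B * (b - a) * (b - a) / INR n).
  replace (D * B * (b - a) * (b - a) / INR n) with (INR n * (D * B * ((b - a) / INR n) * ((b - a) / INR n))) by (field; lra).
  exact Hi.
Qed.

End IBP.


Lemma lip_cont_R (f : R -> R) L x : 0 <= L -> (forall y, Rabs (f y - f x) <= L * Rabs (y - x)) -> continuous f x.
Proof.
  intros HL Hf. apply (filterlim_locally (T:=R_UniformSpace)). intros eps.
  exists (mkposreal (eps / (L + 1)) ltac:(apply Rdiv_lt_0_compat; [apply cond_pos | lra])).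
  intros y Hy. change (Rabs (f y - f x) < eps).
  change (Rabs (y - x) < eps / (L + 1)) in Hy.
  eapply Rle_lt_trans. apply Hf.
  assert (0 < eps) by apply cond_pos.
  apply (Rle_lt_trans _ ((L + 1) * Rabs (y - x))). assert (0 <= Rabs (y - x)) by apply Rabs_pos. nra.
  apply (Rmult_lt_reg_r (/ (L + 1))). apply Rinv_0_lt_compat; lra.
  rewrite Rmult_comm, <- Rmult_assoc, Rinv_l by lra. lra.
Qed.

Lemma abs_fst_le (z : C) : Rabs (fst z) <= Cmod z.
Proof. apply re_le_Cmod. Qed.
Lemma abs_snd_le (z : C) : Rabs (snd z) <= Cmod z.
Proof.
  destruct z as [a b]. unfold Cmod; simpl. rewrite <- sqrt_Rsqr_abs. apply sqrt_le_1_alt.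
  unfold Rsqr. nra.
Qed.
Lemma Cmod_le_sum (z : C) : Cmod z <= Rabs (fst z) + Rabs (snd z).
Proof.
  destruct z as [a b]. unfold Cmod; simpl.
  rewrite <- (sqrt_Rsqr (Rabs a + Rabs b)) by (pose proof (Rabs_pos a); pose proof (Rabs_pos b); lra).
  apply sqrt_le_1_alt. unfold Rsqr.
  pose proof (Rabs_pos a); pose proof (Rabs_pos b).
  assert (a * a = Rabs a * Rabs a) by (rewrite <- Rabs_mult; rewrite Rabs_pos_eq; nra).
  assert (b * b = Rabs b * Rabs b) by (rewrite <- Rabs_mult; rewrite Rabs_pos_eq; nra).
  nra.
Qed.

Lemma lip_cont_C (f : R -> C) L x : 0 <= L -> (forall y, Cmod (f y - f x) <= L * Rabs (y - x)) ->
  @continuous R_UniformSpace CR f x.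
Proof.
  intros HL Hf. apply cC_intro.
  - apply (lip_cont_R _ L); auto. intros y. eapply Rle_trans. 2: apply (Hf y).
    destruct (f y), (f x); apply (abs_fst_le (_ , _)).
  - apply (lip_cont_R _ L); auto. intros y. eapply Rle_trans. 2: apply (Hf y).
    destruct (f y), (f x); apply (abs_snd_le (_ , _)).
Qed.

Lemma RInt_deriv (F f : R -> R) a b : a <= b ->
  (forall x, a <= x <= b -> is_derive F x (f x)) -> (forall x, a <= x <= b -> continuous f x) ->
  RInt f a b = F b - F a.
Proof.
  intros Hab H1 H2. apply (is_RInt_unique (V:=R_CompleteNormedModule)).
  apply (is_RInt_derive (V:=R_CompleteNormedModule)).
  - intros x Hx. rewrite Rmin_left in Hx by lra. rewrite Rmax_right in Hx by lra. auto.
  - intros x Hx. rewrite Rmin_left in Hx by lra. rewrite Rmax_right in Hx by lra. auto.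
Qed.

Section Rho.
Variable mu : R.
Hypothesis Hmu : 0 < mu.

Lemma rho_eq x : jbr_negpow mu x = exp (- mu / 2 * ln (1 + x ^ 2)).
Proof. reflexivity. Qed.

Lemma rho_derive x : is_derive (jbr_negpow mu) x (exp (- mu / 2 * ln (1 + x ^ 2)) * (- mu / 2 * (2 * x / (1 + x ^ 2)))).
Proof.
  unfold jbr_negpow, Rpower. auto_derive.
  - nra.
  - replace (x * (x * 1)) with (x ^ 2) by ring. field. nra.
Qed.

Lemma rho_cont x : continuous (jbr_negpow mu) x.
Proof. eapply dR_cont. apply rho_derive. Qed.

Lemma rho_01 x : 0 <= jbr_negpow mu x <= 1.
Proof.
  rewrite rho_eq. split. left; apply exp_pos.
  apply Rle_trans with (exp 0); [| rewrite exp_0; lra].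
  assert (0 <= ln (1 + x ^ 2)). { rewrite <- ln_1. apply ln_le; nra. }
  destruct (Req_dec (- mu / 2 * ln (1 + x ^ 2)) 0) as [E|E]. rewrite E; lra.
  left. apply exp_increasing. nra.
Qed.

Lemma rho_le_pow x : 1 <= x -> jbr_negpow mu x <= exp (- mu * ln x).
Proof.
  intros Hx. rewrite rho_eq.
  assert (ln (x ^ 2) <= ln (1 + x ^ 2)) by (apply ln_le; nra).
  replace (ln (x ^ 2)) with (2 * ln x) in H.
  2: { simpl. rewrite Rmult_1_r, ln_mult by lra. ring. }
  destruct (Req_dec (- mu / 2 * ln (1 + x ^ 2)) (- mu * ln x)) as [E|E]. rewrite E; lra.
  left. apply exp_increasing. nra.
Qed.

End Rho.


Lemma div_bound X Y Z q : Rabs X <= Y -> 0 < Z -> Z <= q -> Rabs (X / q) <= Y / Z.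
Proof.
  intros H1 H2 H3. rewrite Rabs_div by lra. rewrite (Rabs_pos_eq q) by lra.
  unfold Rdiv. apply Rmult_le_compat; auto. apply Rabs_pos. left; apply Rinv_0_lt_compat; lra.
  apply Rinv_le_contravar; lra.
Qed.

Definition decay (mu a : R) := / a + exp (- mu * ln a).

Section Tail.
Variables (mu t0 t1 : R).
Hypothesis Hmu : 0 < mu.
Hypothesis Ht0 : 0 < t0.
Hypothesis Ht01 : t0 < t1.

Definition c2 := / (2 * t0) + 3 * t1 / (2 * t0 ^ 2).
Definition Ct := / t0 + c2 + / (2 * t0 * mu).

Lemma c2_pos : 0 < c2.
Proof. unfold c2. assert (0 < t0 ^ 2) by nra. apply Rplus_lt_0_compat. apply Rinv_0_lt_compat; lra.
  apply Rdiv_lt_0_compat; lra. Qed.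
Lemma Ct_pos : 0 < Ct.
Proof. unfold Ct. pose proof c2_pos. assert (0 < / t0) by (apply Rinv_0_lt_compat; lra).
  assert (0 < / (2 * t0 * mu)) by (apply Rinv_0_lt_compat; nra). lra. Qed.

Variables (sg t y K : R) (p p' : R -> R) (u : R -> C) (A B : R).
Hypothesis Hsg : sg * sg = 1.
Hypothesis Ht : t0 <= t <= t1.
Hypothesis HyK : Rabs y <= K.
Hypothesis Hpd : forall x, is_derive p x (p' x).
Hypothesis Hp'c : forall x, continuous p' x.
Hypothesis Hpb : forall x, 1 <= x -> Rabs (p x) <= x.
Hypothesis Hp'b : forall x, 1 <= x -> Rabs (p' x) <= 1.
Hypothesis HuA : forall x, Cmod (u x) <= A.
Hypothesis HuB : forall c d, c <= d -> Cmod (u d - u c) <= B * RInt (jbr_negpow mu) c d.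

Definition qq x := y + 3 * t * x ^ 2.
Definition rr x := p x / qq x.
Definition rr' x := (p' x * qq x - p x * (6 * t * x)) / qq x ^ 2.
Definition ee x := expi (sg * (y * x + t * x ^ 3)).
Definition hh x := (Ci * RtoC (- sg) * RtoC (rr x) * ee x)%C.
Definition hh' x := (RtoC (p x) * ee x - Ci * RtoC sg * RtoC (rr' x) * ee x)%C.

Definition M0 := 1 + K / t0.

Lemma K_nonneg : 0 <= K.
Proof. pose proof (Rabs_pos y). lra. Qed.

Lemma qq_lb x : M0 <= x -> 2 * t0 * x ^ 2 <= qq x /\ 1 <= x.
Proof.
  intros Hx. unfold M0 in Hx. pose proof K_nonneg.
  assert (0 <= K / t0) by (apply Rdiv_le_0_compat; lra).
  assert (K <= t0 * x). { apply (Rmult_le_reg_r (/ t0)). apply Rinv_0_lt_compat; lra.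
    replace (t0 * x * / t0) with x by (field; lra). unfold Rdiv in *. lra. }
  assert (y >= - K) by (pose proof (Rle_abs (- y)) as Hy; rewrite Rabs_Ropp in Hy; lra).
  unfold qq. split; [|lra]. nra.
Qed.

Lemma ee_mod x : Cmod (ee x) = 1.
Proof. apply Cmod_expi. Qed.

Lemma qq_derive x : is_derive qq x (6 * t * x).
Proof. unfold qq. auto_derive; auto. ring. Qed.

Lemma rr_derive x : qq x <> 0 -> is_derive rr x (rr' x).
Proof.
  intros Hq. unfold rr, rr'. apply (is_derive_div p qq x (p' x) (6 * t * x)); auto. apply qq_derive.
Qed.

Lemma sg_abs : Rabs sg = 1.
Proof.
  destruct (Rle_or_lt 0 sg). rewrite Rabs_pos_eq by lra. nra. rewrite Rabs_left by lra. nra.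
Qed.

Lemma hh_derive x : M0 <= x -> @is_derive R_AbsRing CR hh x (hh' x).
Proof.
  intros Hx. destruct (qq_lb x Hx) as [Hq H1]. assert (Hq0 : qq x <> 0) by (assert (0 < 2 * t0 * x ^ 2) by (apply Rmult_lt_0_compat; [lra | apply pow_lt; lra]); lra).
  eapply dC_eq.
  - unfold hh. apply dC_mult. apply dC_mult. apply dC_const. apply dC_RtoC. apply rr_derive; auto.
    unfold ee. apply dC_expi. auto_derive; auto.
  - unfold hh', ee. assert (E : p x = sg * sg * (rr x * qq x)) by (rewrite Hsg; unfold rr; field; auto).
    rewrite E. unfold qq.
    apply injective_projections; simpl; ring.
Qed.

Lemma inv_qq2_cont x : M0 <= x -> continuous (fun z => / qq z ^ 2) x.
Proof.
  intros Hx. destruct (qq_lb x Hx) as [Hq H1].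
  eapply dR_cont. apply (is_derive_inv (fun z => qq z ^ 2)). 
  apply (is_derive_pow qq 2 x (6 * t * x)). apply qq_derive. apply pow_nonzero.
  assert (0 < 2 * t0 * x ^ 2) by (apply Rmult_lt_0_compat; [lra | apply pow_lt; lra]); lra.
Qed.

Lemma rr'_cont x : M0 <= x -> continuous rr' x.
Proof.
  intros Hx. unfold rr'. apply (continuous_ext (fun z => (p' z * qq z - p z * (6 * t * z)) * / qq z ^ 2)).
  { intros; reflexivity. }
  apply cR_mult. 2: apply inv_qq2_cont; auto.
  apply cR_minus; apply cR_mult. apply Hp'c. eapply dR_cont; apply qq_derive.
  eapply dR_cont; apply Hpd. apply (dR_cont _ _ (6 * t)). auto_derive; auto. ring.
Qed.

Lemma ee_cont x : @continuous R_UniformSpace CR ee x.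
Proof. unfold ee. apply cC_expi. eapply dR_cont. auto_derive; auto. Qed.

Lemma hh'_cont x : M0 <= x -> @continuous R_UniformSpace CR hh' x.
Proof.
  intros Hx. unfold hh'. apply (continuous_ext (fun z => (RtoC (p z) * ee z + (RtoC (-1) * Ci * RtoC sg) * RtoC (rr' z) * ee z)%C)).
  { intros z. apply injective_projections; simpl; ring. }
  apply cC_plus. apply cC_mult. apply cC_RtoC. eapply dR_cont; apply Hpd. apply ee_cont.
  apply cC_mult. apply cC_mult. apply cC_const. apply cC_RtoC. apply rr'_cont; auto. apply ee_cont.
Qed.

Lemma B_nonneg : 0 <= B.
Proof.
  assert (H := HuB 0 1 ltac:(lra)). assert (Hp : 0 < RInt (jbr_negpow mu) 0 1).
  { apply RInt_gt_0. lra. intros x _. rewrite rho_eq. apply exp_pos. intros x _. apply rho_cont. }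
  pose proof (Cmod_ge_0 (u 1 - u 0)%C). destruct (Rle_or_lt 0 B); auto. nra.
Qed.

Lemma Cmod_sym (a b : C) : Cmod (a - b) = Cmod (b - a).
Proof. rewrite <- Cmod_opp. f_equal. ring. Qed.

Lemma u_lip c d : Cmod (u d - u c) <= B * Rabs (d - c).
Proof.
  pose proof B_nonneg.
  assert (G : forall c d, c <= d -> Cmod (u d - u c) <= B * (d - c)).
  { intros c' d' Hcd. eapply Rle_trans. apply HuB; auto. apply Rmult_le_compat_l; auto.
    apply RInt_rho_le; auto. apply rho_cont. apply rho_01; auto. }
  destruct (Rle_or_lt c d).
  - rewrite Rabs_pos_eq by lra. auto.
  - rewrite Rabs_left by lra. rewrite Cmod_sym. replace (- (d - c)) with (c - d) by ring. apply G; lra.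
Qed.

Lemma u_cont x : @continuous R_UniformSpace CR u x.
Proof.
  apply (lip_cont_C _ B). apply B_nonneg. intros z. apply u_lip.
Qed.

Lemma A_nonneg : 0 <= A.
Proof. eapply Rle_trans. apply (Cmod_ge_0 (u 0)). apply HuA. Qed.

Lemma pos_lb x : M0 <= x -> 0 < 2 * t0 * x ^ 2.
Proof. intros Hx. destruct (qq_lb x Hx). apply Rmult_lt_0_compat; [lra | apply pow_lt; lra]. Qed.

Lemma rr_bound x : M0 <= x -> Rabs (rr x) <= / (2 * t0 * x).
Proof.
  intros Hx. pose proof (pos_lb x Hx). destruct (qq_lb x Hx) as [Hq H1].
  unfold rr. eapply Rle_trans. apply (div_bound _ x (2 * t0 * x ^ 2)); auto.
  right. field. lra.
Qed.

Lemma rr'_bound x : M0 <= x -> Rabs (rr' x) <= c2 / x ^ 2.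
Proof.
  intros Hx. pose proof (pos_lb x Hx) as Hpos. destruct (qq_lb x Hx) as [Hq H1].
  assert (Hq0 : qq x <> 0) by lra.
  assert (E : rr' x = p' x / qq x - (p x * (6 * t * x)) / qq x ^ 2) by (unfold rr'; field; auto).
  rewrite E. unfold Rminus. eapply Rle_trans. apply Rabs_triang. rewrite Rabs_Ropp.
  assert (B1 : Rabs (p' x / qq x) <= 1 / (2 * t0 * x ^ 2)) by (apply div_bound; auto).
  assert (B2 : Rabs (p x * (6 * t * x) / qq x ^ 2) <= (x * (6 * t1 * x)) / ((2 * t0 * x ^ 2) ^ 2)).
  { apply div_bound. rewrite Rabs_mult. apply Rmult_le_compat; try apply Rabs_pos. auto.
    rewrite Rabs_pos_eq by nra. nra. apply pow_lt; auto. apply pow_incr; lra. }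
  eapply Rle_trans. apply Rplus_le_compat; [exact B1 | exact B2].
  right. unfold c2. field. lra.
Qed.

Lemma hh_mod x : Cmod (hh x) = Rabs (rr x).
Proof.
  unfold hh. rewrite !Cmod_mult, ee_mod, Cmod_Ci, !Cmod_R, Rabs_Ropp, sg_abs. ring.
Qed.

Lemma hh'_bound b x : M0 <= x <= b -> Cmod (hh' x) <= b + c2.
Proof.
  intros Hx. destruct (qq_lb x (proj1 Hx)) as [Hq H1].
  unfold hh'. eapply Rle_trans. apply Cmod_minus_le.
  rewrite !Cmod_mult, ee_mod, Cmod_Ci, !Cmod_R, sg_abs.
  apply Rplus_le_compat. rewrite Rmult_1_r. eapply Rle_trans. apply Hpb; auto. lra.
  eapply Rle_trans. rewrite !Rmult_1_r, Rmult_1_l. apply rr'_bound; tauto.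
  pose proof c2_pos.
  assert (1 <= x ^ 2) by nra.
  apply (Rle_trans _ (c2 / 1)). unfold Rdiv. apply Rmult_le_compat_l. lra.
  apply Rinv_le_contravar; lra. lra.
Qed.

Theorem tail_bound a b : M0 <= a -> a <= b ->
  Cmod (RIC (fun x => RtoC (p x) * ee x * u x)%C a b) <= (A + B) * Ct * decay mu a.
Proof.
  intros Ha Hab. pose proof A_nonneg as HA. pose proof B_nonneg as HB. pose proof c2_pos as Hc2.
  destruct (qq_lb a Ha) as [_ Ha1].
  set (k x := (Ci * RtoC sg * RtoC (rr' x) * ee x)%C).
  assert (Hk : forall x, M0 <= x -> @continuous R_UniformSpace CR k x).
  { intros x Hx. unfold k. apply cC_mult. apply cC_mult. apply cC_const. apply cC_RtoC. apply rr'_cont; auto. apply ee_cont. }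
  assert (Ex1 : exC (fun x => hh' x * u x)%C a b).
  { apply exC_cont. intros z Hz. rewrite Rmin_left in Hz by lra. rewrite Rmax_right in Hz by lra.
    apply cC_mult. apply hh'_cont; lra. apply u_cont. }
  assert (Ex2 : exC (fun x => k x * u x)%C a b).
  { apply exC_cont. intros z Hz. rewrite Rmin_left in Hz by lra. rewrite Rmax_right in Hz by lra.
    apply cC_mult. apply Hk; lra. apply u_cont. }
  rewrite (RInt_ext (V:=CRC) _ (fun x => @plus CRC (hh' x * u x)%C (k x * u x)%C)).
  2: { intros x _. rewrite plusCC. unfold k, hh'. apply injective_projections; simpl; ring. }
  rewrite (RInt_plus (V:=CRC)) by assumption. rewrite plusCC.
  set (I1 := RIC (fun x => hh' x * u x)%C a b). set (I2 := RIC (fun x => k x * u x)%C a b).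
  set (J := (hh b * u b - hh a * u a)%C).
  set (H := fun x => / (2 * t0 * x)).
  assert (Hibp : Cmod (I1 - J) <= B * RInt (fun x => H x * jbr_negpow mu x) a b).
  { apply (ibp_ineq hh hh' u H (jbr_negpow mu) a b (b + c2) B); auto.
    - lra.
    - intros x Hx. apply hh_derive; lra.
    - intros x Hx. apply hh'_cont; lra.
    - intros x; apply u_cont.
    - intros x Hx. unfold H. apply (dR_cont _ _ (- (2 * t0) / (2 * t0 * x) ^ 2)).
      apply (is_derive_inv (fun x => 2 * t0 * x)). auto_derive; auto; ring. nra.
    - intros x; apply rho_cont.
    - intros x Hx. apply hh'_bound; lra.
    - intros x Hx. rewrite hh_mod. apply rr_bound; lra.
    - intros x z Hx Hxz Hz. unfold H. apply Rinv_le_contravar; nra.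
    - intros x; apply rho_01; auto. }
  assert (HJ : Cmod J <= A * / (t0 * a)).
  { unfold J. eapply Rle_trans. apply Cmod_minus_le. rewrite !Cmod_mult, !hh_mod.
    destruct (qq_lb b ltac:(lra)) as [_ Hb1].
    assert (Rabs (rr b) <= / (2 * t0 * a)).
    { eapply Rle_trans. apply rr_bound; lra. apply Rinv_le_contravar; nra. }
    assert (Rabs (rr a) <= / (2 * t0 * a)) by (apply rr_bound; lra).
    pose proof (HuA a). pose proof (HuA b). pose proof (Rabs_pos (rr a)). pose proof (Rabs_pos (rr b)).
    replace (/ (t0 * a)) with (2 * / (2 * t0 * a)) by (field; lra). nra. }
  assert (HI2 : Cmod I2 <= c2 * A * / a).
  { unfold I2. eapply Rle_trans. apply (Cmod_RInt_le _ (fun x => c2 * A / x ^ 2)); auto.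
    - apply exR_cont. intros z Hz. rewrite Rmin_left in Hz by lra. rewrite Rmax_right in Hz by lra.
      apply (dR_cont _ _ (c2 * A * (- (2 * z) / z ^ 4))). auto_derive. nra. field. nra.
    - intros x Hx. unfold k. rewrite !Cmod_mult, Cmod_Ci, Cmod_R, sg_abs, ee_mod, Cmod_R.
      assert (Hr := rr'_bound x ltac:(lra)). pose proof (HuA x).
      assert (0 <= c2 / x ^ 2) by (apply Rdiv_le_0_compat; [lra | nra]).
      unfold Rdiv in *. pose proof (Cmod_ge_0 (u x)). pose proof (Rabs_pos (rr' x)). nra.
    - rewrite (RInt_deriv (fun x => - (c2 * A) / x)). 2: lra.
      + assert (0 <= c2 * A / b). { apply Rdiv_le_0_compat; [nra | lra]. }
        unfold Rdiv in *. lra.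
      + intros x Hx. auto_derive. lra. field. lra.
      + intros x Hx. apply (dR_cont _ _ (c2 * A * (- (2 * x) / x ^ 4))). auto_derive. nra. field. nra. }
  assert (HR : RInt (fun x => H x * jbr_negpow mu x) a b <= / (2 * t0 * mu) * exp (- mu * ln a)).
  { eapply Rle_trans. apply (RInt_le _ (fun x => / (2 * t0) * (exp (- mu * ln x) / x))); auto.
    - apply exR_cont. intros z Hz. rewrite Rmin_left in Hz by lra. rewrite Rmax_right in Hz by lra.
      apply cR_mult. apply (dR_cont _ _ (- (2 * t0) / (2 * t0 * z) ^ 2)).
      apply (is_derive_inv (fun x => 2 * t0 * x)). auto_derive; auto; ring. nra. apply rho_cont.
    - apply exR_cont. intros z Hz. rewrite Rmin_left in Hz by lra. rewrite Rmax_right in Hz by lra.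
      eapply dR_cont. auto_derive. lra. reflexivity.
    - intros x Hx. unfold H. replace (/ (2 * t0 * x)) with (/ (2 * t0) * / x) by (field; lra).
      unfold Rdiv. rewrite (Rmult_comm (exp _)). rewrite Rmult_assoc. apply Rmult_le_compat_l.
      left; apply Rinv_0_lt_compat; lra. apply Rmult_le_compat_l. left; apply Rinv_0_lt_compat; lra.
      apply rho_le_pow; auto; lra.
    - rewrite (RInt_deriv (fun x => / (2 * t0) * (- exp (- mu * ln x) / mu))). 2: lra.
      + assert (0 < exp (- mu * ln b)) by apply exp_pos.
        assert (0 < / (2 * t0)) by (apply Rinv_0_lt_compat; lra).
        replace (/ (2 * t0 * mu)) with (/ (2 * t0) * / mu) by (field; lra).
        assert (0 < / mu) by (apply Rinv_0_lt_compat; lra).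
        assert (0 < / (2 * t0) * / mu * exp (- mu * ln b)) by (repeat apply Rmult_lt_0_compat; auto).
        unfold Rdiv. lra.
      + intros x Hx. auto_derive. lra. field. split; lra.
      + intros x Hx. eapply dR_cont. auto_derive. lra. reflexivity. }
  assert (Hsum : Cmod (I1 + I2) <= Cmod (I1 - J) + Cmod J + Cmod I2).
  { replace (I1 + I2)%C with ((I1 - J) + J + I2)%C by cring.
    eapply Rle_trans. apply Cmod_triangle. apply Rplus_le_compat_r. apply Cmod_triangle. }
  eapply Rle_trans. exact Hsum.
  unfold decay, Ct.
  assert (0 < / a) by (apply Rinv_0_lt_compat; lra).
  assert (0 < exp (- mu * ln a)) by apply exp_pos.
  assert (0 < / t0) by (apply Rinv_0_lt_compat; lra).
  assert (0 < / (2 * t0 * mu)) by (apply Rinv_0_lt_compat; nra).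
  replace (/ (t0 * a)) with (/ t0 * / a) in HJ by (field; lra).
  assert (B * RInt (fun x => H x * jbr_negpow mu x) a b <= B * (/ (2 * t0 * mu) * exp (- mu * ln a))) by (apply Rmult_le_compat_l; auto).
  set (ia := / a) in *. set (E := exp (- mu * ln a)) in *. set (it := / t0) in *. set (m := / (2 * t0 * mu)) in *.
  assert (X : (A + B) * (it + c2 + m) * (ia + E) = A * it * ia + A * c2 * ia + B * m * E +
     (A * it * E + A * c2 * E + A * m * ia + A * m * E + B * it * ia + B * it * E + B * c2 * ia + B * c2 * E + B * m * ia)) by ring.
  rewrite X.
  assert (0 <= A * it * E + A * c2 * E + A * m * ia + A * m * E + B * it * ia + B * it * E + B * c2 * ia + B * c2 * E + B * m * ia).
  { repeat apply Rplus_le_le_0_compat; apply Rmult_le_pos; try apply Rmult_le_pos; lra. }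
  lra.
Qed.

End Tail.


Lemma abs_sin_le s : Rabs (sin s) <= Rabs s.
Proof.
  replace (sin s) with (sin s - sin 0) by (rewrite sin_0; ring).
  replace (Rabs s) with (1 * Rabs (s - 0)) by (rewrite Rminus_0_r; ring).
  apply (bounded_variation sin cos). intros t _. split. apply is_derive_sin.
  pose proof (COS_bound t). apply Rabs_le; lra.
Qed.

Lemma expi_taylor s : Rabs s <= 1 -> Cmod (expi s - 1 - Ci * RtoC s) <= 2 * s ^ 2.
Proof.
  intros Hs. eapply Rle_trans. apply Cmod_le_sum. simpl.
  assert (H1 : Rabs (cos s - cos 0) <= Rabs s * Rabs (s - 0)).
  { apply (bounded_variation cos (fun t => - sin t)). intros t Ht. split. apply is_derive_cos.
    rewrite Rabs_Ropp. eapply Rle_trans. apply abs_sin_le. rewrite !Rminus_0_r in Ht. exact Ht. }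
  assert (H2 : Rabs ((sin s - s) - (sin 0 - 0)) <= s ^ 2 * Rabs (s - 0)).
  { apply (bounded_variation (fun t => sin t - t) (fun t => cos t - 1)). intros t Ht. split.
    - auto_derive; auto; ring.
    - replace (cos t - 1) with (cos t - cos 0) by (rewrite cos_0; ring).
      eapply Rle_trans. apply (bounded_variation cos (fun t => - sin t) (Rabs t)).
      intros z Hz. split. apply is_derive_cos. rewrite Rabs_Ropp. eapply Rle_trans. apply abs_sin_le.
      rewrite !Rminus_0_r in Hz. exact Hz.
      rewrite !Rminus_0_r in *. rewrite <- Rabs_mult. simpl. rewrite Rmult_1_r.
      rewrite Rabs_pos_eq by nra. assert (t * t <= s * s). { rewrite <- (Rabs_pos_eq (t*t)) by nra. rewrite <- (Rabs_pos_eq (s*s)) by nra. rewrite !Rabs_mult. apply Rmult_le_compat; try apply Rabs_pos; auto. } lra. }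
  rewrite cos_0, !Rminus_0_r in H1. rewrite sin_0, !Rminus_0_r in H2.
  replace (cos s + - (1) + - (0 * s - 1 * 0)) with (cos s - 1) by ring.
  replace (sin s + - 0 + - (0 * 0 + 1 * s)) with (sin s - s) by ring.
  replace (s * (s * 1)) with (s ^ 2) by ring.
  replace (sin s - s - (0 - 0)) with (sin s - s) in H2 by ring.
  assert (Rabs s * Rabs s = s ^ 2) by (rewrite <- Rabs_mult; simpl; rewrite Rmult_1_r; apply Rabs_pos_eq; nra).
  assert (s ^ 2 * Rabs s <= s ^ 2) by (assert (0 <= s^2) by nra; nra).
  lra.
Qed.

Lemma deriv_eps (T : R -> C) x0 l :
  (forall eps, 0 < eps -> exists delta, 0 < delta /\ forall k, Rabs k < delta ->
     Cmod (T (x0 + k) - T x0 - RtoC k * l) <= eps * Rabs k) ->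
  @is_derive R_AbsRing CR T x0 l.
Proof.
  intros H. unfold is_derive, filterdiff. split. apply is_linear_scal_l.
  intros x Hx. apply (is_filter_lim_locally_unique (K:=R_AbsRing) (V:=R_NormedModule)) in Hx. subst x.
  intros eps. destruct (H eps (cond_pos eps)) as [d [Hd Hk]].
  exists (mkposreal d Hd). intros y Hy. change (Rabs (y - x0) < d) in Hy.
  rewrite normC. change (norm (minus y x0)) with (Rabs (y - x0)).
  change (Cmod (Cminus (Cminus (T y) (T x0)) (@scal R_Ring CR (Rminus y x0) l)) <= eps * Rabs (y - x0)). rewrite scalC.
  replace y with (x0 + (y - x0)) at 1 by ring. apply Hk; auto.
Qed.

Lemma mvi (T T' : R -> C) x0 S k : Rabs k <= 1 ->
  (forall y, Rabs (y - x0) <= 1 -> @is_derive R_AbsRing CR T y (T' y) /\ Cmod (T' y - T' x0) <= S) ->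
  Cmod (T (x0 + k) - T x0 - RtoC k * T' x0) <= 2 * S * Rabs k.
Proof.
  intros Hk H.
  set (Phi := fun y => (T y + RtoC (- y) * T' x0)%C).
  assert (HP : forall y, Rabs (y - x0) <= 1 -> @is_derive R_AbsRing CR Phi y (T' y - T' x0)%C).
  { intros y Hy. eapply dC_eq. apply dC_plus. apply H; auto. apply dC_mult. apply (dC_RtoC _ _ (-1)).
    auto_derive; auto; ring. apply dC_const.
    destruct (T' y), (T' x0). apply injective_projections; simpl; ring. }
  assert (Hf : Rabs (fst (Phi (x0 + k)) - fst (Phi x0)) <= S * Rabs (x0 + k - x0)).
  { apply (bounded_variation (fun y => fst (Phi y)) (fun y => fst (T' y - T' x0)%C)).
    intros z Hz. replace (x0 + k - x0) with k in Hz by ring. split.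
    apply dC_fst. apply HP. lra. eapply Rle_trans. apply abs_fst_le. apply H. lra. }
  assert (Hs : Rabs (snd (Phi (x0 + k)) - snd (Phi x0)) <= S * Rabs (x0 + k - x0)).
  { apply (bounded_variation (fun y => snd (Phi y)) (fun y => snd (T' y - T' x0)%C)).
    intros z Hz. replace (x0 + k - x0) with k in Hz by ring. split.
    apply dC_snd. apply HP. lra. eapply Rle_trans. apply abs_snd_le. apply H. lra. }
  replace (x0 + k - x0) with k in * by ring.
  assert (E : Cminus (Cminus (T (x0 + k)) (T x0)) (Cmult (RtoC k) (T' x0)) = Cminus (Phi (x0 + k)) (Phi x0)).
  { unfold Phi. destruct (T' x0). apply injective_projections; simpl; ring. }
  rewrite E. eapply Rle_trans. apply Cmod_le_sum.
  destruct (Phi (x0 + k)), (Phi x0). simpl in *. unfold Rminus in *. lra.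
Qed.

Section Lim.
Variable F : (R -> Prop) -> Prop.
Hypothesis FF : ProperFilter F.

Lemma lim_near (S : R -> C) (l : C) : filterlim S F (@locally CRC l) ->
  forall eps, 0 < eps -> F (fun N => Cmod (S N - l) < eps).
Proof.
  intros H eps Heps.
  assert (H2 := proj1 (filterlim_locally (U:=CRC) S l) H (mkposreal (eps / 2) ltac:(lra))).
  eapply filter_imp; [|exact H2]. intros N [B1 B2]. simpl in B1, B2.
  change (Rabs (fst (S N) - fst l) < eps / 2) in B1.
  change (Rabs (snd (S N) - snd l) < eps / 2) in B2.
  eapply Rle_lt_trans. apply Cmod_le_sum. destruct (S N), l. simpl in *. unfold Rminus in *. lra.
Qed.

Lemma lim3_bound (S1 S2 S3 : R -> C) l1 l2 l3 k c :
  filterlim S1 F (@locally CRC l1) -> filterlim S2 F (@locally CRC l2) -> filterlim S3 F (@locally CRC l3) ->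
  F (fun N => Cmod (S1 N - S2 N - RtoC k * S3 N) <= c) ->
  Cmod (l1 - l2 - RtoC k * l3) <= c.
Proof.
  intros H1 H2 H3 Hc. apply le_epsilon. intros eps Heps.
  set (e := eps / (2 + Rabs k)). assert (He : 0 < e). { unfold e. apply Rdiv_lt_0_compat; auto. pose proof (Rabs_pos k). lra. }
  assert (Hall := filter_and _ _ (filter_and _ _ (lim_near _ _ H1 e He) (lim_near _ _ H2 e He)) (filter_and _ _ (lim_near _ _ H3 e He) Hc)).
  destruct (filter_ex _ Hall) as [N [[A1 A2] [A3 A4]]].
  assert (E : (l1 - l2 - RtoC k * l3 = (S1 N - S2 N - RtoC k * S3 N) - (S1 N - l1) + (S2 N - l2) + RtoC k * (S3 N - l3))%C) by ring.
  rewrite E.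
  eapply Rle_trans. apply Cmod_triangle. eapply Rle_trans. apply Rplus_le_compat_r. apply Cmod_triangle.
  eapply Rle_trans. apply Rplus_le_compat_r. apply Rplus_le_compat_r. apply Cmod_minus_le.
  rewrite Cmod_mult, Cmod_R.
  assert (Rabs k * Cmod (S3 N - l3) <= Rabs k * e) by (apply Rmult_le_compat_l; [apply Rabs_pos | lra]).
  assert (e * (2 + Rabs k) = eps) by (unfold e; field; pose proof (Rabs_pos k); lra).
  nra.
Qed.

Lemma lim1_bound (S1 : R -> C) l1 c :
  filterlim S1 F (@locally CRC l1) -> F (fun N => Cmod (S1 N) <= c) -> Cmod l1 <= c.
Proof.
  intros H1 Hc.
  assert (H := lim3_bound S1 (fun _ => RtoC 0) (fun _ => RtoC 0) l1 (RtoC 0) (RtoC 0) 0 c H1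
    (filterlim_const (U:=CRC) _) (filterlim_const (U:=CRC) _)).
  assert (E1 : forall z : C, Cminus (Cminus z (RtoC 0)) (Cmult (RtoC 0) (RtoC 0)) = z) by (intros; ring).
  rewrite E1 in H. apply H.
  eapply filter_imp; [|exact Hc]. intros N HN. rewrite E1. exact HN.
Qed.

End Lim.

Lemma decay_small mu : 0 < mu -> forall eps, 0 < eps -> exists a0, 1 <= a0 /\ forall a, a0 <= a -> decay mu a <= eps.
Proof.
  intros Hmu eps Heps.
  exists (Rmax 1 (Rmax (2 / eps) (exp (- ln (eps / 2) / mu)))). split. apply Rmax_l.
  intros a Ha. unfold decay.
  assert (H1 : 1 <= a) by (eapply Rle_trans; [apply Rmax_l | exact Ha]).
  assert (H2 : 2 / eps <= a) by (eapply Rle_trans; [eapply Rle_trans; [apply Rmax_l | apply Rmax_r] | exact Ha]).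
  assert (H3 : exp (- ln (eps / 2) / mu) <= a) by (eapply Rle_trans; [eapply Rle_trans; [apply Rmax_r | apply Rmax_r] | exact Ha]).
  assert (B1 : / a <= eps / 2).
  { replace (eps / 2) with (/ (2 / eps)) by (field; lra). apply Rinv_le_contravar; auto.
    apply Rdiv_lt_0_compat; lra. }
  assert (B2 : exp (- mu * ln a) <= eps / 2).
  { assert (- ln (eps / 2) / mu <= ln a).
    { rewrite <- (ln_exp (- ln (eps / 2) / mu)). apply ln_le; auto. apply exp_pos. }
    assert (- mu * ln a <= ln (eps / 2)).
    { apply (Rmult_le_compat_l mu) in H; [|lra]. replace (mu * (- ln (eps / 2) / mu)) with (- ln (eps / 2)) in H by (field; lra). lra. }
    rewrite <- (exp_ln (eps / 2)) by lra.
    destruct (Req_dec (- mu * ln a) (ln (eps / 2))) as [E|E]. rewrite E; lra. left; apply exp_increasing; lra. }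
  lra.
Qed.

Lemma decay_le2 mu a : 0 < mu -> 1 <= a -> decay mu a <= 2.
Proof.
  intros Hmu Ha. unfold decay.
  assert (/ a <= 1) by (rewrite <- Rinv_1; apply Rinv_le_contravar; lra).
  assert (0 <= ln a) by (rewrite <- ln_1; apply ln_le; lra).
  assert (exp (- mu * ln a) <= 1).
  { rewrite <- exp_0. destruct (Req_dec (- mu * ln a) 0) as [E|E]. rewrite E; lra. left; apply exp_increasing; nra. }
  lra.
Qed.

Lemma decay_nonneg mu a : 0 < a -> 0 <= decay mu a.
Proof. intros Ha. unfold decay. pose proof (exp_pos (- mu * ln a)). assert (0 < / a) by (apply Rinv_0_lt_compat; lra). lra. Qed.


Lemma ballC (u v : C) eps : Cmod (v - u) < eps -> @ball CRC u eps v.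
Proof.
  intros H. split.
  - change (Rabs (fst v - fst u) < eps). eapply Rle_lt_trans; [|exact H].
    destruct u, v. apply (abs_fst_le (_, _)).
  - change (Rabs (snd v - snd u) < eps). eapply Rle_lt_trans; [|exact H].
    destruct u, v. apply (abs_snd_le (_, _)).
Qed.

Lemma RIC_chasles (f : R -> C) a b c : (forall x, @continuous R_UniformSpace CR f x) ->
  RIC f a c = (RIC f a b + RIC f b c)%C.
Proof.
  intros Hc. rewrite <- plusCC. symmetry. apply (RInt_Chasles (V:=CRC)); apply exC_cont; auto.
Qed.

Section Conv.
Variables (mu : R) (Phi : R -> C) (a0 Cst : R).
Hypothesis Ha0 : 1 <= a0.
Hypothesis HC : 0 <= Cst.
Hypothesis Hc : forall x, @continuous R_UniformSpace CR Phi x.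
Hypothesis Htail : forall a b, a0 <= a -> a <= b -> Cmod (RIC Phi a b) <= Cst * decay mu a.
Hypothesis Hmu : 0 < mu.

Lemma diff_bound u v : a0 <= u -> a0 <= v -> Cmod (RIC Phi 0 v - RIC Phi 0 u) <= Cst * decay mu (Rmin u v).
Proof.
  intros Hu Hv. rewrite (RIC_chasles Phi 0 u v Hc).
  replace (RIC Phi 0 u + RIC Phi u v - RIC Phi 0 u)%C with (RIC Phi u v) by cring.
  destruct (Rle_or_lt u v).
  - rewrite Rmin_left by lra. apply Htail; lra.
  - rewrite Rmin_right by lra. rewrite <- (opp_RInt_swap (V:=CRC)).
    2: apply exC_cont; auto.
    change (Cmod (Copp (RIC Phi v u)) <= Cst * decay mu v). rewrite Cmod_opp. apply Htail; lra.
Qed.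

Lemma conv_tail : exists l, filterlim (fun N => RIC Phi 0 N) (Rbar_locally p_infty) (@locally CRC l).
Proof.
  apply (filterlim_locally_cauchy (U:=CRC)). intros eps.
  destruct (decay_small mu Hmu (eps / (2 * Cst + 1))) as [a1 [Ha1 Hd]].
  { apply Rdiv_lt_0_compat. apply cond_pos. lra. }
  exists (fun N => Rmax a0 a1 < N). split.
  - exists (Rmax a0 a1). auto.
  - intros u v Hu Hv. apply ballC.
    assert (a0 <= u /\ a1 <= u) by (pose proof (Rmax_l a0 a1); pose proof (Rmax_r a0 a1); lra).
    assert (a0 <= v /\ a1 <= v) by (pose proof (Rmax_l a0 a1); pose proof (Rmax_r a0 a1); lra).
    eapply Rle_lt_trans. apply diff_bound; tauto.
    assert (D := Hd (Rmin u v) ltac:(apply Rmin_glb; tauto)).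
    pose proof (cond_pos eps).
    assert (Cst * decay mu (Rmin u v) <= Cst * (eps / (2 * Cst + 1))) by (apply Rmult_le_compat_l; auto).
    assert (Cst * (eps / (2 * Cst + 1)) < eps).
    { apply (Rmult_lt_reg_r (2 * Cst + 1)). lra. unfold Rdiv. rewrite Rmult_assoc, Rmult_assoc, Rinv_l by lra. nra. }
    lra.
Qed.

Lemma conv_bound l c1 : filterlim (fun N => RIC Phi 0 N) (Rbar_locally p_infty) (@locally CRC l) ->
  Cmod (RIC Phi 0 a0) <= c1 -> Cmod l <= c1 + Cst * decay mu a0.
Proof.
  intros Hl H1. apply (lim1_bound (Rbar_locally p_infty) (Rbar_locally_filter p_infty) _ _ _ Hl).
  exists a0. intros N HN. rewrite (RIC_chasles Phi 0 a0 N Hc).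
  eapply Rle_trans. apply Cmod_triangle. apply Rplus_le_compat; auto. apply Htail; lra.
Qed.

End Conv.


Definition ampOK (mu A B : R) (u : R -> C) :=
  (forall x, Cmod (u x) <= A) /\ (forall c d, c <= d -> Cmod (u d - u c) <= B * RInt (jbr_negpow mu) c d).

Lemma rho_even mu x : jbr_negpow mu (- x) = jbr_negpow mu x.
Proof. unfold jbr_negpow. f_equal. ring. Qed.

Lemma RInt_rho_opp mu c d : RInt (jbr_negpow mu) (- d) (- c) = RInt (jbr_negpow mu) c d.
Proof.
  assert (Ex : ex_RInt (jbr_negpow mu) (- d) (- c)).
  { apply exR_cont. intros; apply rho_cont. }
  apply (RInt_correct (V:=R_CompleteNormedModule)) in Ex.
  apply (is_RInt_comp_opp (V:=R_NormedModule)) in Ex.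
  apply (is_RInt_unique (V:=R_CompleteNormedModule)) in Ex.
  rewrite <- Ex.
  rewrite (RInt_ext (V:=R_CompleteNormedModule) _ (fun y => opp (jbr_negpow mu y))).
  2: { intros x _. rewrite rho_even. reflexivity. }
  rewrite (RInt_opp (V:=R_CompleteNormedModule)). 2: apply exR_cont; intros; apply rho_cont.
  apply (opp_RInt_swap (V:=R_CompleteNormedModule)). apply exR_cont; intros; apply rho_cont.
Qed.

Lemma amp_opp mu A B u : ampOK mu A B u -> ampOK mu A B (fun x => u (- x)).
Proof.
  intros [H1 H2]. split. intros; apply H1.
  intros c d Hcd. rewrite Cmod_sym. rewrite <- RInt_rho_opp. apply H2. lra.
Qed.

Lemma amp_mul mu A B u (c : C) : Cmod c = 1 -> ampOK mu A B u -> ampOK mu A B (fun x => c * u x)%C.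
Proof.
  intros Hc [H1 H2]. split.
  - intros x. rewrite Cmod_mult, Hc, Rmult_1_l. apply H1.
  - intros a b Hab. replace (c * u b - c * u a)%C with (c * (u b - u a))%C by ring.
    rewrite Cmod_mult, Hc, Rmult_1_l. apply H2; auto.
Qed.

Section Main.
Variables (mu t0 t1 : R).
Hypothesis Hmu : 0 < mu.
Hypothesis Ht0 : 0 < t0.
Hypothesis Ht01 : t0 < t1.
Variables (w : R -> C) (A B : R).
Hypothesis Hw : W1inf0mu_bound mu w A B.
Variable t : R.
Hypothesis Ht : t0 <= t <= t1.

Definition U x := (RtoC (/ (2 * PI)) * w x)%C.

Lemma inv2pi : 0 < / (2 * PI) <= 1.
Proof.
  pose proof PI2_1. split. apply Rinv_0_lt_compat; lra.
  rewrite <- Rinv_1. apply Rinv_le_contravar; lra.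
Qed.

Lemma U_ok : ampOK mu A B U.
Proof.
  destruct Hw as [H1 H2]. pose proof inv2pi as Hp.
  assert (HA : forall z, Cmod (RtoC (/ (2 * PI)) * z)%C <= Cmod z).
  { intros z. rewrite Cmod_mult, Cmod_R, Rabs_pos_eq by lra. pose proof (Cmod_ge_0 z). nra. }
  split.
  - intros x. unfold U. eapply Rle_trans. apply HA. apply H1.
  - intros c d Hcd. unfold U. replace (RtoC (/ (2 * PI)) * w d - RtoC (/ (2 * PI)) * w c)%C with (RtoC (/ (2 * PI)) * (w d - w c))%C by ring.
    eapply Rle_trans. apply HA. apply H2; auto.
Qed.

Lemma A_nn : 0 <= A.
Proof. destruct U_ok as [H _]. eapply Rle_trans. apply Cmod_ge_0. apply (H 0). Qed.

Lemma B_nn : 0 <= B.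
Proof.
  destruct U_ok as [_ H]. assert (H' := H 0 1 ltac:(lra)). assert (Hp : 0 < RInt (jbr_negpow mu) 0 1).
  { apply RInt_gt_0. lra. intros x _. rewrite rho_eq. apply exp_pos. intros x _. apply rho_cont. }
  pose proof (Cmod_ge_0 (U 1 - U 0)%C). destruct (Rle_or_lt 0 B); auto. nra.
Qed.

Lemma amp_cont u : ampOK mu A B u -> forall x, @continuous R_UniformSpace CR u x.
Proof.
  intros [H1 H2] x. apply (u_cont mu Hmu u B H2).
Qed.

Definition f y x := (expi (y * x + t * x ^ 3) * U x)%C.
Definition FF y x := (f y x + f y (- x))%C.
Definition GG y x := (Ci * RtoC x * (f y x - f y (- x)))%C.

Lemma f_cont y x : @continuous R_UniformSpace CR (f y) x.
Proof.
  unfold f. apply cC_mult. apply cC_expi. eapply dR_cont. auto_derive; auto. apply (amp_cont _ U_ok).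
Qed.

Lemma fo_cont y x : @continuous R_UniformSpace CR (fun x => f y (- x)) x.
Proof.
  unfold f. apply cC_mult. apply cC_expi. eapply dR_cont. auto_derive; auto. apply (amp_cont _ (amp_opp _ _ _ _ U_ok)).
Qed.

Lemma FF_cont y x : @continuous R_UniformSpace CR (FF y) x.
Proof. unfold FF. apply cC_plus. apply f_cont. apply fo_cont. Qed.

Lemma GG_cont y x : @continuous R_UniformSpace CR (GG y) x.
Proof.
  unfold GG. apply cC_mult. apply cC_mult. apply cC_const. apply cC_RtoC. apply continuous_id.
  apply (continuous_ext (fun x => f y x + RtoC (-1) * f y (- x))%C).
  { intros z. apply injective_projections; simpl; ring. }
  apply cC_plus. apply f_cont. apply cC_mult. apply cC_const. apply fo_cont.
Qed.

Definition CT := Ct mu t0 t1.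

Lemma tailP sg y K (p p' : R -> R) u a b :
  sg * sg = 1 -> Rabs y <= K ->
  (forall x, is_derive p x (p' x)) -> (forall x, continuous p' x) ->
  (forall x, 1 <= x -> Rabs (p x) <= x) -> (forall x, 1 <= x -> Rabs (p' x) <= 1) ->
  ampOK mu A B u -> M0 t0 K <= a -> a <= b ->
  Cmod (RIC (fun x => RtoC (p x) * ee sg t y x * u x)%C a b) <= (A + B) * CT * decay mu a.
Proof.
  intros Hsg HyK Hpd Hpc Hpb Hp'b [HuA HuB] Ha Hab.
  apply (tail_bound mu t0 t1 Hmu Ht0 Ht01 sg t y K p p' u A B Hsg Ht HyK Hpd Hpc Hpb Hp'b HuA HuB a b Ha Hab).
Qed.

Lemma p1_d x : is_derive (fun _ : R => 1) x 0.
Proof. auto_derive; auto. Qed.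
Lemma p2_d x : is_derive (fun x : R => x) x 1.
Proof. auto_derive; auto. Qed.
Lemma p1_c x : continuous (fun _ : R => 0) x.
Proof. apply continuous_const. Qed.
Lemma p2_c x : continuous (fun _ : R => 1) x.
Proof. apply continuous_const. Qed.
Lemma p1_b x : 1 <= x -> Rabs 1 <= x.
Proof. intros; rewrite Rabs_R1; lra. Qed.
Lemma p2_b x : 1 <= x -> Rabs x <= x.
Proof. intros; rewrite Rabs_pos_eq; lra. Qed.
Lemma p1'_b x : 1 <= x -> Rabs 0 <= 1.
Proof. intros; rewrite Rabs_R0; lra. Qed.
Lemma p2'_b x : 1 <= x -> Rabs 1 <= 1.
Proof. intros; rewrite Rabs_R1; lra. Qed.

Lemma sg1 : 1 * 1 = 1. Proof. ring. Qed.
Lemma sgm1 : -1 * -1 = 1. Proof. ring. Qed.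

Lemma form1 y x : f y x = (RtoC 1 * ee 1 t y x * U x)%C.
Proof. unfold f, ee. replace (1 * (y * x + t * x ^ 3)) with (y * x + t * x ^ 3) by ring. ring. Qed.
Lemma form2 y x : f y (- x) = (RtoC 1 * ee (-1) t y x * U (- x))%C.
Proof. unfold f, ee. replace (-1 * (y * x + t * x ^ 3)) with (y * - x + t * (- x) ^ 3) by ring. ring. Qed.
Lemma formG y x : GG y x = (RtoC x * ee 1 t y x * (Ci * U x) + RtoC x * ee (-1) t y x * ((- Ci) * U (- x)))%C.
Proof.
  unfold GG, f, ee. replace (1 * (y * x + t * x ^ 3)) with (y * x + t * x ^ 3) by ring.
  replace (-1 * (y * x + t * x ^ 3)) with (y * - x + t * (- x) ^ 3) by ring. ring.
Qed.

Lemma Cmod_mCi : Cmod (- Ci) = 1.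
Proof. rewrite Cmod_opp. apply Cmod_Ci. Qed.

Lemma tailF y K a b : Rabs y <= K -> M0 t0 K <= a -> a <= b ->
  Cmod (RIC (FF y) a b) <= 2 * (A + B) * CT * decay mu a.
Proof.
  intros HyK Ha Hab.
  rewrite (RInt_ext (V:=CRC) _ (fun x => @plus CRC (RtoC 1 * ee 1 t y x * U x)%C (RtoC 1 * ee (-1) t y x * U (- x))%C)).
  2: { intros x _. unfold FF. rewrite form1, form2. reflexivity. }
  rewrite (RInt_plus (V:=CRC)).
  2: { apply exC_cont. intros z _. apply (continuous_ext (f y)). intros; apply form1. apply f_cont. }
  2: { apply exC_cont. intros z _. apply (continuous_ext (fun x => f y (- x))). intros; apply form2. apply fo_cont. }
  rewrite plusCC. eapply Rle_trans. apply Cmod_triangle.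
  replace (2 * (A + B) * CT * decay mu a) with ((A + B) * CT * decay mu a + (A + B) * CT * decay mu a) by ring.
  apply Rplus_le_compat.
  - exact (tailP 1 y K (fun _ => 1) (fun _ => 0) U a b sg1 HyK p1_d p1_c p1_b p1'_b U_ok Ha Hab).
  - exact (tailP (-1) y K (fun _ => 1) (fun _ => 0) (fun x => U (- x)) a b sgm1 HyK p1_d p1_c p1_b p1'_b (amp_opp _ _ _ _ U_ok) Ha Hab).
Qed.

Lemma tailG y K a b : Rabs y <= K -> M0 t0 K <= a -> a <= b ->
  Cmod (RIC (GG y) a b) <= 2 * (A + B) * CT * decay mu a.
Proof.
  intros HyK Ha Hab.
  assert (Hc1 : forall x, @continuous R_UniformSpace CR (fun x => RtoC x * ee 1 t y x * (Ci * U x))%C x).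
  { intros x. apply cC_mult. apply cC_mult. apply cC_RtoC. apply continuous_id.
    unfold ee. apply cC_expi. eapply dR_cont. auto_derive; auto. apply amp_cont. apply amp_mul. apply Cmod_Ci. apply U_ok. }
  assert (Hc2 : forall x, @continuous R_UniformSpace CR (fun x => RtoC x * ee (-1) t y x * (- Ci * U (- x)))%C x).
  { intros x. apply cC_mult. apply cC_mult. apply cC_RtoC. apply continuous_id.
    unfold ee. apply cC_expi. eapply dR_cont. auto_derive; auto. apply amp_cont. apply amp_mul. apply Cmod_mCi. apply amp_opp. apply U_ok. }
  rewrite (RInt_ext (V:=CRC) _ (fun x => @plus CRC (RtoC x * ee 1 t y x * (Ci * U x))%C (RtoC x * ee (-1) t y x * (- Ci * U (- x)))%C)).
  2: { intros x _. rewrite formG. reflexivity. }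
  rewrite (RInt_plus (V:=CRC)).
  2: { apply exC_cont. intros z _. apply Hc1. }
  2: { apply exC_cont. intros z _. apply Hc2. }
  rewrite plusCC. eapply Rle_trans. apply Cmod_triangle.
  replace (2 * (A + B) * CT * decay mu a) with ((A + B) * CT * decay mu a + (A + B) * CT * decay mu a) by ring.
  apply Rplus_le_compat.
  - exact (tailP 1 y K (fun x => x) (fun _ => 1) (fun x => Ci * U x)%C a b sg1 HyK p2_d p2_c p2_b p2'_b (amp_mul _ _ _ _ _ Cmod_Ci U_ok) Ha Hab).
  - exact (tailP (-1) y K (fun x => x) (fun _ => 1) (fun x => - Ci * U (- x))%C a b sgm1 HyK p2_d p2_c p2_b p2'_b (amp_mul _ _ _ _ _ Cmod_mCi (amp_opp _ _ _ _ U_ok)) Ha Hab).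
Qed.

Lemma sym_int (g : R -> C) N : (forall x, @continuous R_UniformSpace CR g x) ->
  (forall x, @continuous R_UniformSpace CR (fun x => g (- x)) x) ->
  RIC g (- N) N = RIC (fun x => Cplus (g x) (g (- x))) 0 N.
Proof.
  intros Hg Hgo. rewrite (RIC_chasles g (- N) 0 N Hg).
  assert (E : RIC (fun x => g (- x)) 0 N = RIC g (- N) 0).
  { assert (Ex : exC g (- 0) (- N)) by (apply exC_cont; auto).
    apply (RInt_correct (V:=CRC)) in Ex. apply (is_RInt_comp_opp (V:=CR)) in Ex.
    apply (is_RInt_unique (V:=CRC)) in Ex.
    rewrite (RInt_opp (V:=CRC)) in Ex by (apply exC_cont; auto).
    rewrite Ropp_0 in Ex. rewrite <- (opp_RInt_swap (V:=CRC) g 0 (- N)) by (apply exC_cont; auto).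
    rewrite <- Ex. change (@eq C (RIC (fun x => g (- x)) 0 N) (Copp (Copp (RIC (fun x => g (- x)) 0 N)))). cring. }
  rewrite <- E. rewrite <- plusCC. rewrite (RInt_plus (V:=CRC)) by (apply exC_cont; auto).
  apply Cplus_comm.
Qed.

Lemma f_shift y k x : f (y + k) x = (expi (k * x) * f y x)%C.
Proof. unfold f. replace ((y + k) * x + t * x ^ 3) with (k * x + (y * x + t * x ^ 3)) by ring. rewrite expi_add. ring. Qed.
Lemma f_shift' y k x : f (y + k) (- x) = (expi (- (k * x)) * f y (- x))%C.
Proof. unfold f. replace ((y + k) * - x + t * (- x) ^ 3) with (- (k * x) + (y * - x + t * (- x) ^ 3)) by ring. rewrite expi_add. ring. Qed.

Lemma f_mod y x : Cmod (f y x) <= A.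
Proof. unfold f. rewrite Cmod_mult, Cmod_expi, Rmult_1_l. apply U_ok. Qed.

Lemma Dparam y k c d : 0 <= c -> c <= d -> Rabs k * d <= 1 ->
  Cmod (RIC (FF (y + k)) c d - RIC (FF y) c d - RtoC k * RIC (GG y) c d) <= (d - c) * (4 * A * k ^ 2 * d ^ 2).
Proof.
  intros Hc Hcd Hk.
  assert (ExF : forall z, exC (FF z) c d) by (intros; apply exC_cont; intros; apply FF_cont).
  assert (ExG : exC (GG y) c d) by (apply exC_cont; intros; apply GG_cont).
  assert (E1 : (RtoC k * RIC (GG y) c d)%C = RIC (fun x => GG y x * RtoC k)%C c d).
  { rewrite RIC_mult_r by auto. cring. }
  rewrite E1.
  change (Cmod (@minus CRC (@minus CRC (RIC (FF (y + k)) c d) (RIC (FF y) c d)) (RIC (fun x => GG y x * RtoC k)%C c d)) <= (d - c) * (4 * A * k ^ 2 * d ^ 2)).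
  rewrite <- (RInt_minus (V:=CRC)) by auto.
  rewrite <- (RInt_minus (V:=CRC)).
  2: { apply (ex_RInt_minus (V:=CRC)); auto. }
  2: { apply exC_mult_r; auto. }
  apply Cmod_RInt_const; auto.
  { apply (ex_RInt_minus (V:=CRC)). apply (ex_RInt_minus (V:=CRC)); auto. apply exC_mult_r; auto. }
  intros x Hx. rewrite !minusCC.
  assert (E : (FF (y + k) x - FF y x - GG y x * RtoC k)%C =
     (f y x * (expi (k * x) - 1 - Ci * RtoC (k * x)) + f y (- x) * (expi (- (k * x)) - 1 - Ci * RtoC (- (k * x))))%C).
  { unfold FF, GG. rewrite f_shift, f_shift'. rewrite RtoC_opp, !RtoC_mult. ring. }
  change (Cmod (Cminus (Cminus (FF (y + k) x) (FF y x)) (Cmult (GG y x) (RtoC k))) <= 4 * A * k ^ 2 * d ^ 2). rewrite E. eapply Rle_trans. apply Cmod_triangle. rewrite !Cmod_mult.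
  assert (Hs : Rabs (k * x) <= 1).
  { rewrite Rabs_mult, (Rabs_pos_eq x) by lra. pose proof (Rabs_pos k). nra. }
  assert (T1 := expi_taylor (k * x) Hs).
  assert (T2 := expi_taylor (- (k * x)) ltac:(rewrite Rabs_Ropp; exact Hs)).
  assert (Hx2 : (k * x) ^ 2 <= k ^ 2 * d ^ 2).
  { replace ((k * x) ^ 2) with (k ^ 2 * x ^ 2) by ring. apply Rmult_le_compat_l. nra. nra. }
  replace ((- (k * x)) ^ 2) with ((k * x) ^ 2) in T2 by ring.
  pose proof (f_mod y x). pose proof (f_mod y (- x)).
  pose proof (Cmod_ge_0 (f y x)). pose proof (Cmod_ge_0 (f y (- x))).
  pose proof (Cmod_ge_0 (expi (k * x) - 1 - Ci * RtoC (k * x))%C).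
  pose proof (Cmod_ge_0 (expi (- (k * x)) - 1 - Ci * RtoC (- (k * x)))%C).
  assert (Cmod (f y x) * Cmod (expi (k * x) - 1 - Ci * RtoC (k * x))%C <= A * (2 * (k ^ 2 * d ^ 2))).
  { apply Rmult_le_compat; auto. lra. }
  assert (Cmod (f y (- x)) * Cmod (expi (- (k * x)) - 1 - Ci * RtoC (- (k * x)))%C <= A * (2 * (k ^ 2 * d ^ 2))).
  { apply Rmult_le_compat; auto. lra. }
  lra.
Qed.

Lemma Dderiv y0 c d : 0 <= c -> c <= d -> @is_derive R_AbsRing CR (fun y => RIC (FF y) c d) y0 (RIC (GG y0) c d).
Proof.
  intros Hc Hcd. apply deriv_eps. intros eps Heps.
  pose proof A_nn as HA.
  set (Q := (d - c) * (4 * A * d ^ 2)).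
  assert (HQ : 0 <= Q) by (unfold Q; apply Rmult_le_pos; [lra | apply Rmult_le_pos; [lra | nra]]).
  exists (Rmin (/ (d + 1)) (eps / (Q + 1))). split.
  { apply Rmin_pos. apply Rinv_0_lt_compat; lra. apply Rdiv_lt_0_compat; lra. }
  intros k Hk.
  assert (Hk1 : Rabs k < / (d + 1)) by (eapply Rlt_le_trans; [exact Hk | apply Rmin_l]).
  assert (Hk2 : Rabs k < eps / (Q + 1)) by (eapply Rlt_le_trans; [exact Hk | apply Rmin_r]).
  assert (Hkd : Rabs k * d <= 1).
  { assert (Rabs k * (d + 1) <= 1).
    { apply (Rmult_le_reg_r (/ (d + 1))). apply Rinv_0_lt_compat; lra.
      rewrite Rmult_assoc, Rinv_r, Rmult_1_r, Rmult_1_l by lra. lra. }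
    pose proof (Rabs_pos k). nra. }
  eapply Rle_trans. apply (Dparam y0 k c d Hc Hcd Hkd).
  replace ((d - c) * (4 * A * k ^ 2 * d ^ 2)) with (Q * Rabs k * Rabs k).
  2: { unfold Q. rewrite <- Rmult_assoc. replace (k ^ 2) with (Rabs k * Rabs k). ring.
       rewrite <- Rabs_mult. simpl. rewrite Rmult_1_r. apply Rabs_pos_eq. nra. }
  pose proof (Rabs_pos k).
  assert (Q * Rabs k <= eps).
  { apply Rle_trans with (Q * (eps / (Q + 1))). apply Rmult_le_compat_l; lra.
    apply (Rmult_le_reg_r (Q + 1)). lra. unfold Rdiv. rewrite Rmult_assoc, (Rmult_assoc eps), Rinv_l by lra. nra. }
  nra.
Qed.

Lemma CT_pos : 0 < CT.
Proof. apply Ct_pos; auto. Qed.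

Lemma M0_ge1 K : 0 <= K -> 1 <= M0 t0 K.
Proof. intros HK. unfold M0. assert (0 <= K / t0) by (apply Rdiv_le_0_compat; lra). lra. Qed.

Lemma convF y : exists l, filterlim (fun N => RIC (FF y) 0 N) (Rbar_locally p_infty) (@locally CRC l).
Proof.
  apply (conv_tail mu (FF y) (M0 t0 (Rabs y)) (2 * (A + B) * CT)).
  - pose proof CT_pos; pose proof A_nn; pose proof B_nn. apply Rmult_le_pos; [|lra]. lra.
  - apply FF_cont.
  - intros a b Ha Hab. apply (tailF y (Rabs y)); auto. lra.
  - exact Hmu.
Qed.

Lemma convG y : exists l, filterlim (fun N => RIC (GG y) 0 N) (Rbar_locally p_infty) (@locally CRC l).
Proof.
  apply (conv_tail mu (GG y) (M0 t0 (Rabs y)) (2 * (A + B) * CT)).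
  - pose proof CT_pos; pose proof A_nn; pose proof B_nn. apply Rmult_le_pos; [|lra]. lra.
  - apply GG_cont.
  - intros a b Ha Hab. apply (tailG y (Rabs y)); auto. lra.
  - exact Hmu.
Qed.

Definition vF y : C := proj1_sig (constructive_indefinite_description _ (convF y)).
Definition vG y : C := proj1_sig (constructive_indefinite_description _ (convG y)).

Lemma vF_lim y : filterlim (fun N => RIC (FF y) 0 N) (Rbar_locally p_infty) (@locally CRC (vF y)).
Proof. unfold vF. destruct (constructive_indefinite_description _ (convF y)). simpl. auto. Qed.
Lemma vG_lim y : filterlim (fun N => RIC (GG y) 0 N) (Rbar_locally p_infty) (@locally CRC (vG y)).
Proof. unfold vG. destruct (constructive_indefinite_description _ (convG y)). simpl. auto. Qed.

Definition C0 := 2 * (1 + / t0) ^ 2 + 4 * CT.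

Lemma C0_pos : 0 < C0.
Proof. unfold C0. pose proof CT_pos. assert (0 < (1 + / t0) ^ 2). apply pow_lt. assert (0 < / t0) by (apply Rinv_0_lt_compat; lra). lra. lra. Qed.

Lemma final_arith Rr c : 1 <= Rr -> 0 <= c -> c <= 2 * A * (M0 t0 Rr) ^ 2 ->
  c + 2 * (A + B) * CT * decay mu (M0 t0 Rr) <= C0 * Rr ^ 2 * (A + B).
Proof.
  intros HR Hc Hc2. pose proof A_nn. pose proof B_nn. pose proof CT_pos.
  assert (HM : 1 <= M0 t0 Rr) by (apply M0_ge1; lra).
  assert (Hd := decay_le2 mu (M0 t0 Rr) Hmu HM).
  assert (Hit : 0 < / t0) by (apply Rinv_0_lt_compat; lra).
  assert (HM2 : M0 t0 Rr <= (1 + / t0) * Rr).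
  { unfold M0. unfold Rdiv. nra. }
  assert (HM3 : (M0 t0 Rr) ^ 2 <= (1 + / t0) ^ 2 * Rr ^ 2).
  { replace ((1 + / t0) ^ 2 * Rr ^ 2) with (((1 + / t0) * Rr) ^ 2) by ring. apply pow_incr. lra. }
  assert (2 * (A + B) * CT * decay mu (M0 t0 Rr) <= 4 * CT * (A + B) * Rr ^ 2).
  { assert (0 <= decay mu (M0 t0 Rr)) by (apply decay_nonneg; lra).
    assert (1 <= Rr ^ 2) by nra.
    assert (0 <= (A + B) * CT) by nra.
    apply Rle_trans with (2 * (A + B) * CT * 2). apply Rmult_le_compat_l; lra. nra. }
  assert (c <= 2 * (1 + / t0) ^ 2 * Rr ^ 2 * (A + B)).
  { eapply Rle_trans. exact Hc2. assert (0 <= (1 + /t0)^2 * Rr^2) by (apply Rmult_le_pos; apply pow_le; lra).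
    nra. }
  unfold C0. nra.
Qed.

Lemma vF_bound x Rr : 1 <= Rr -> Rabs x <= Rr -> Cmod (vF x) <= C0 * Rr ^ 2 * (A + B).
Proof.
  intros HR Hx. pose proof A_nn as HA.
  assert (HM : 1 <= M0 t0 Rr) by (apply M0_ge1; lra).
  eapply Rle_trans.
  apply (conv_bound mu (FF x) (M0 t0 Rr) (2 * (A + B) * CT)).
  - apply FF_cont.
  - intros a b Ha Hab. apply (tailF x Rr); auto.
  - apply vF_lim.
  - apply (Cmod_RInt_const _ 0 (M0 t0 Rr) (2 * A)). lra. apply exC_cont; intros; apply FF_cont.
    intros z _. unfold FF. eapply Rle_trans. apply Cmod_triangle. pose proof (f_mod x z). pose proof (f_mod x (- z)). lra.
  - apply final_arith. lra. apply Rmult_le_pos; lra. replace (M0 t0 Rr - 0) with (M0 t0 Rr) by ring.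
    assert (0 <= A * (M0 t0 Rr - 1)) by (apply Rmult_le_pos; lra). nra.
Qed.

Lemma vG_bound x Rr : 1 <= Rr -> Rabs x <= Rr -> Cmod (vG x) <= C0 * Rr ^ 2 * (A + B).
Proof.
  intros HR Hx. pose proof A_nn as HA.
  assert (HM : 1 <= M0 t0 Rr) by (apply M0_ge1; lra).
  eapply Rle_trans.
  apply (conv_bound mu (GG x) (M0 t0 Rr) (2 * (A + B) * CT)).
  - apply GG_cont.
  - intros a b Ha Hab. apply (tailG x Rr); auto.
  - apply vG_lim.
  - apply (Cmod_RInt_const _ 0 (M0 t0 Rr) (M0 t0 Rr * (2 * A))). lra. apply exC_cont; intros; apply GG_cont.
    intros z Hz. unfold GG. rewrite !Cmod_mult, Cmod_Ci, Cmod_R, Rabs_pos_eq by lra.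
    eapply Rle_trans. apply Rmult_le_compat_l. lra. apply Cmod_minus_le.
    pose proof (f_mod x z). pose proof (f_mod x (- z)).
    pose proof (Cmod_ge_0 (f x z)). pose proof (Cmod_ge_0 (f x (- z))). nra.
  - apply final_arith. lra. apply Rmult_le_pos; [lra | apply Rmult_le_pos; lra]. replace (M0 t0 Rr - 0) with (M0 t0 Rr) by ring.
    right. ring.
Qed.

Lemma frac_le X e : 0 <= X -> 0 < e -> X * (e / (2 * (X + 1))) <= e / 2.
Proof.
  intros HX He. apply (Rmult_le_reg_r (2 * (X + 1))). lra.
  unfold Rdiv. rewrite Rmult_assoc, (Rmult_assoc e), Rinv_l by lra. nra.
Qed.

Lemma vF_deriv x0 : @is_derive R_AbsRing CR vF x0 (vG x0).
Proof.
  apply deriv_eps. intros eps Heps.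
  pose proof A_nn as HA. pose proof B_nn as HB. pose proof CT_pos as HCT.
  set (K := Rabs x0 + 1). set (Cst := 2 * (A + B) * CT).
  assert (HCst : 0 <= Cst) by (unfold Cst; apply Rmult_le_pos; lra).
  destruct (decay_small mu Hmu (eps / (2 * (4 * Cst + 1)))) as [a1 [Ha1 Hd]].
  { apply Rdiv_lt_0_compat; lra. }
  set (M := Rmax (M0 t0 K) a1).
  assert (HMK : M0 t0 K <= M) by apply Rmax_l.
  assert (HM1 : 1 <= M) by (eapply Rle_trans; [exact Ha1 | apply Rmax_r]).
  assert (HdM : decay mu M <= eps / (2 * (4 * Cst + 1))) by (apply Hd; apply Rmax_r).
  assert (HdM0 : 0 <= decay mu M) by (apply decay_nonneg; lra).
  assert (HM3 : 0 <= 4 * A * M ^ 3) by (apply Rmult_le_pos; [lra | apply pow_le; lra]).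
  exists (Rmin (/ M) (eps / (2 * (4 * A * M ^ 3 + 1)))). split.
  { apply Rmin_pos. apply Rinv_0_lt_compat; lra. apply Rdiv_lt_0_compat; lra. }
  intros k Hk.
  assert (Hk1 : Rabs k < / M) by (eapply Rlt_le_trans; [exact Hk | apply Rmin_l]).
  assert (Hk2 : Rabs k < eps / (2 * (4 * A * M ^ 3 + 1))) by (eapply Rlt_le_trans; [exact Hk | apply Rmin_r]).
  assert (HiM : / M <= 1) by (rewrite <- Rinv_1; apply Rinv_le_contravar; lra).
  assert (HkM : Rabs k * M <= 1).
  { apply (Rmult_le_reg_r (/ M)). apply Rinv_0_lt_compat; lra.
    rewrite Rmult_assoc, Rinv_r, Rmult_1_r, Rmult_1_l by lra. lra. }
  pose proof (Rabs_pos k) as Hk0.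
  eapply Rle_trans.
  - apply (lim3_bound (Rbar_locally p_infty) (Rbar_locally_filter p_infty)
      (fun N => RIC (FF (x0 + k)) 0 N) (fun N => RIC (FF x0) 0 N) (fun N => RIC (GG x0) 0 N)
      (vF (x0 + k)) (vF x0) (vG x0) k ((M - 0) * (4 * A * k ^ 2 * M ^ 2) + 2 * (2 * Cst * decay mu M) * Rabs k)).
    apply vF_lim. apply vF_lim. apply vG_lim.
    exists M. intros N HN.
    set (T := fun y => RIC (FF y) M N). set (T' := fun y => RIC (GG y) M N).
    rewrite (RIC_chasles (FF (x0 + k)) 0 M N (FF_cont _)).
    rewrite (RIC_chasles (FF x0) 0 M N (FF_cont _)).
    rewrite (RIC_chasles (GG x0) 0 M N (GG_cont _)).
    set (D1 := (RIC (FF (x0 + k)) 0 M - RIC (FF x0) 0 M - RtoC k * RIC (GG x0) 0 M)%C).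
    set (D2 := (T (Rplus x0 k) - T x0 - RtoC k * T' x0)%C).
    assert (E : (RIC (FF (x0 + k)) 0 M + RIC (FF (x0 + k)) M N - (RIC (FF x0) 0 M + RIC (FF x0) M N) -
       RtoC k * (RIC (GG x0) 0 M + RIC (GG x0) M N))%C = (D1 + D2)%C).
    { unfold D1, D2, T, T'. cring. }
    rewrite E. eapply Rle_trans. apply Cmod_triangle. apply Rplus_le_compat.
    + apply Dparam; lra.
    + unfold D2. apply mvi. lra.
      intros y Hy. split.
      * unfold T, T'. apply Dderiv; lra.
      * eapply Rle_trans. apply Cmod_minus_le.
        assert (HyK : Rabs y <= K).
        { unfold K. replace y with (x0 + (y - x0)) by ring. eapply Rle_trans. apply Rabs_triang. lra. }
        assert (Hx0K : Rabs x0 <= K) by (unfold K; lra).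
        unfold T', Cst. pose proof (tailG y K M N HyK HMK ltac:(lra)). pose proof (tailG x0 K M N Hx0K HMK ltac:(lra)). lra.
  - replace (M - 0) with M by ring.
    replace (M * (4 * A * k ^ 2 * M ^ 2)) with ((4 * A * M ^ 3) * Rabs k * Rabs k).
    2: { replace (k ^ 2) with (Rabs k * Rabs k). ring.
         rewrite <- Rabs_mult. simpl. rewrite Rmult_1_r. apply Rabs_pos_eq. nra. }
    assert (P1 : (4 * A * M ^ 3) * Rabs k <= eps / 2).
    { eapply Rle_trans. apply Rmult_le_compat_l. exact HM3. left; exact Hk2. apply frac_le; lra. }
    assert (P2 : 4 * Cst * decay mu M <= eps / 2).
    { eapply Rle_trans. apply Rmult_le_compat_l. lra. exact HdM. apply frac_le; lra. }
    nra.
Qed.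

Lemma airy_f x z : airy_integrand w t x z = f x z.
Proof.
  unfold airy_integrand, f, U. rewrite scalC. unfold Rdiv. rewrite Rmult_1_l. ring.
Qed.

Lemma main_local Rr : 1 <= Rr -> exists v : R -> C,
    (forall x, osc_integral_is (airy_integrand w t x) (v x)) /\
    (forall x, - Rr <= x <= Rr ->
       Cmod (v x) <= C0 * Rr ^ 2 * (A + B) /\
       exists dv : C, @is_derive R_AbsRing C_R_NormedModule v x dv /\ Cmod dv <= C0 * Rr ^ 2 * (A + B)).
Proof.
  intros HR. exists vF. split.
  - intros x. unfold osc_integral_is.
    apply (filterlim_ext (fun N => RIC (FF x) 0 N)).
    + intros N. rewrite (RInt_ext (V:=CRC) (airy_integrand w t x) (f x)) by (intros; apply airy_f).
      symmetry. apply sym_int. apply f_cont. apply fo_cont.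
    + apply vF_lim.
  - intros x Hx. assert (Hax : Rabs x <= Rr) by (apply Rabs_le; lra). split.
    + apply vF_bound; auto.
    + exists (vG x). split. apply vF_deriv. apply vG_bound; auto.
Qed.

End Main.

Theorem lemma5p1 (mu t0 t1 : R) (Hmu : 0 < mu) (Ht0 : 0 < t0) (Ht01 : t0 < t1) :
  exists C0 : R, 0 < C0 /\
  forall (w : R -> C) (A B : R), W1inf0mu_bound mu w A B ->
  forall (Rr t : R), 1 <= Rr -> t0 <= t <= t1 ->
  exists v : R -> C,
    (forall x, osc_integral_is (airy_integrand w t x) (v x)) /\
    (forall x, - Rr <= x <= Rr ->
       Cmod (v x) <= C0 * Rr ^ 2 * (A + B) /\
       exists dv : C, @is_derive R_AbsRing C_R_NormedModule v x dv /\ Cmod dv <= C0 * Rr ^ 2 * (A + B)).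
Proof.
  exists (C0 mu t0 t1). split. apply C0_pos; auto.
  intros w A B Hw Rr t HR Ht.
  apply (main_local mu t0 t1 Hmu Ht0 Ht01 w A B Hw t Ht Rr HR).
Qed.
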